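(* Let $X$ be a real Banach space, $f\in\Gamma_0(X)$, $S_f\ne\emptyset$. Then $$\inf\{\varepsilon>0\mid \mathrm{Er}\{\mathrm{Ptb}^w(f,\varepsilon)\}=0\}\le\inf\{\varepsilon>0\mid \mathrm{Er}\{\mathrm{Ptb}^w_l(f,\varepsilon)\}=0\}\le|\partial f|_{\rm bd}$$ and $$|\partial f|_{\rm bd}\le\inf\{\varepsilon>0\mid \mathrm{Er}\{\mathrm{Ptb}(f,\varepsilon)\}=0\}\le\inf\{\varepsilon>0\mid \mathrm{Er}\{\mathrm{Ptb}_l(f,\varepsilon)\}=0\}.$$
   Context: $X^*$ is the dual, $\mathbb{B}^*$ its closed unit ball. $\Gamma_0(X)$: proper convex lsc extended-real-valued functions on $X$. For convex $f$, $\partial f(x):=\{x^*\in X^*\mid \langle x^*,u-x\rangle\le f(u)-f(x)\ \forall u\in X\}$. $d(x,S)=\inf_{u\in S}\|u-x\|$, $d(x,\emptyset)=+\infty$, $\inf\emptyset=+\infty$. $S_f:=\{x\mid f(x)\le0\}$, $S_f^=:=\{x\mid f(x)=0\}$. Global error bound modulus: $\mathrm{Er}\,f:=\inf_{f(x)>0}\frac{f(x)}{d(x,S_f)}$. $|\partial f|_{\rm bd}:=\inf_{f(x)=0} d(0,\mathrm{bd}\,\partial f(x))$ (boundary in norm topology of $X^*$). For $x\in S_f^=$, $\varepsilon,\delta\ge0$: $\tau(f,x,\varepsilon,\delta):=\inf_{u:\,f(u)\ge-\varepsilon\|u-x\|-\delta} d(0,\partial f(u))$ if $0\notin\mathrm{int}\,\partial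 f(x)$, and $:=d(0,\mathrm{bd}\,\partial f(x))$ if $0\in\mathrm{int}\,\partial f(x)$. For $\varepsilon\ge0$: $g$ is an $\varepsilon$-perturbation of $f$ ($g\in\mathrm{Ptb}(f,\varepsilon)$) if $S_g\ne\emptyset$, $g=f+p$ with $p:X\to\mathbb{R}$ convex, and there exist $x\in S_f^=$ and $\xi\ge0$ such that $\xi+|\partial f|_{\rm bd}-\tau(f,x,\xi,|p(x)|)\le\varepsilon$ and $|p(u)-p(x)|\le\xi\|u-x\|$ for all $u\in X$. $g$ is a weak $\varepsilon$-perturbation ($g\in\mathrm{Ptb}^w(f,\varepsilon)$) if $S_g\ne\emptyset$, $g=f+p$ with $p:X\to\mathbb{R}$ convex, and there is $x\in S_f^=$ with $|p(u)-p(x)|\le\varepsilon\|u-x\|$ for all $u\in X$. $\mathrm{Ptb}_l(f,\varepsilon):=\{g\mid g(u)-f(u)=\langle x^*,u-x\rangle\ \forall u,\ \text{for some } x\in S_f^=,\ \xi\ge0,\ x^*\in\xi\mathbb{B}^*\text{ with }\xi+|\partial f|_{\rm bd}-\tau(f,x,\xi,0)\le\varepsilon\}$; $\mathrm{Ptb}^w_l(f,\varepsilon):=\{g\mid g(u)-f(u)=\langle x^*,u-x\rangle\ \forall u,\ \text{for some } x\in S_f^=,\ x^*\in\varepsilon\mathbb{B}^*\}$. For each family $\mathcal{F}$ among these, $\mathrm{Er}\{\mathcal{F}\}:=\inf_{g\in\mathcal{F}}\mathrm{Er}\,g$. *)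

(* Defs.v *)
From Stdlib Require Import Reals Lra ClassicalEpsilon.
Open Scope R_scope.

Inductive Rbar : Type := Fin (r : R) | PInf | MInf.

Definition Rbar_le (a b : Rbar) : Prop :=
  match a, b with
  | MInf, _ => True
  | _, PInf => True
  | Fin x, Fin y => x <= y
  | _, _ => False
  end.

Definition Rbar_lt (a b : Rbar) : Prop := Rbar_le a b /\ a <> b.

Definition Rbar_plus_R (a : Rbar) (r : R) : Rbar :=
  match a with Fin x => Fin (x + r) | PInf => PInf | MInf => MInf end.

Definition is_glb (A : Rbar -> Prop) (m : Rbar) : Prop :=
  (forall a, A a -> Rbar_le m a) /\
  (forall m', (forall a, A a -> Rbar_le m' a) -> Rbar_le m' m).

(* infimum in [-oo,+oo]; inf of the empty set is +oo *)
Definition Rbar_inf (A : Rbar -> Prop) : Rbar :=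
  epsilon (inhabits PInf) (is_glb A).

(* "a - b <= e" for a, b in [0,+oo]: with a - (+oo) = -oo for finite a,
   and (+oo) - (+oo) undefined (the inequality is then regarded as false). *)
Definition Rbar_diff_le (a b : Rbar) (e : R) : Prop :=
  match b with
  | Fin y => Rbar_le a (Fin (e + y))
  | PInf => a <> PInf
  | MInf => False
  end.

Definition Rbar_ratio (a d : Rbar) : Rbar :=
  match a with
  | PInf => PInf
  | MInf => MInf
  | Fin x => match d with Fin y => Fin (x / y) | _ => Fin 0 end
  end.

Record Banach : Type := {
  bcar :> Type;
  bzero : bcar;
  badd : bcar -> bcar -> bcar;
  bopp : bcar -> bcar;
  bscal : R -> bcar -> bcar;
  bnorm : bcar -> R;
  badd_assoc : forall x y z, badd x (badd y z) = badd (badd x y) z;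
  badd_comm : forall x y, badd x y = badd y x;
  badd_0l : forall x, badd bzero x = x;
  badd_oppl : forall x, badd (bopp x) x = bzero;
  bscal_assoc : forall a b x, bscal a (bscal b x) = bscal (a * b) x;
  bscal_1 : forall x, bscal 1 x = x;
  bscal_distr_l : forall a x y, bscal a (badd x y) = badd (bscal a x) (bscal a y);
  bscal_distr_r : forall a b x, bscal (a + b) x = badd (bscal a x) (bscal b x);
  bnorm_nonneg : forall x, 0 <= bnorm x;
  bnorm_eq0 : forall x, bnorm x = 0 -> x = bzero;
  bnorm_scal : forall a x, bnorm (bscal a x) = Rabs a * bnorm x;
  bnorm_triangle : forall x y, bnorm (badd x y) <= bnorm x + bnorm y;
  bcomplete : forall s : nat -> bcar,
    (forall e, 0 < e -> exists N, forall m n, (N <= m)%nat -> (N <= n)%nat ->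
        bnorm (badd (s m) (bopp (s n))) < e) ->
    exists l, forall e, 0 < e -> exists N, forall n, (N <= n)%nat ->
        bnorm (badd (s n) (bopp l)) < e
}.

Arguments bzero {_}.
Arguments badd {_}.
Arguments bopp {_}.
Arguments bscal {_}.
Arguments bnorm {_}.

Section Defs.
Variable X : Banach.

Definition bsub (x y : X) : X := badd x (bopp y).

Definition is_dual (phi : X -> R) : Prop :=
  (forall x y, phi (badd x y) = phi x + phi y) /\
  (forall a x, phi (bscal a x) = a * phi x) /\
  (exists M, forall x, Rabs (phi x) <= M * bnorm x).

Definition dnorm (phi : X -> R) : Rbar :=
  Rbar_inf (fun m => exists M, m = Fin M /\ 0 <= M /\
                      forall x, Rabs (phi x) <= M * bnorm x).

Definition dzero : X -> R := fun _ => 0.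
Definition dsub (phi psi : X -> R) : X -> R := fun x => phi x - psi x.

(* subsets of X^* are predicates on functionals (only duals count) *)
Definition d_int (S : (X -> R) -> Prop) (phi : X -> R) : Prop :=
  is_dual phi /\ exists r, 0 < r /\
    forall psi, is_dual psi -> Rbar_lt (dnorm (dsub psi phi)) (Fin r) -> S psi.

Definition d_cl (S : (X -> R) -> Prop) (phi : X -> R) : Prop :=
  is_dual phi /\ forall r, 0 < r ->
    exists psi, is_dual psi /\ S psi /\ Rbar_lt (dnorm (dsub psi phi)) (Fin r).

Definition d_bd (S : (X -> R) -> Prop) (phi : X -> R) : Prop :=
  d_cl S phi /\ ~ d_int S phi.

Definition dist0 (S : (X -> R) -> Prop) : Rbar :=
  Rbar_inf (fun m => exists phi, is_dual phi /\ S phi /\ m = dnorm phi).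

Definition dist (x : X) (S : X -> Prop) : Rbar :=
  Rbar_inf (fun m => exists u, S u /\ m = Fin (bnorm (bsub u x))).

Definition proper (f : X -> Rbar) : Prop :=
  (forall x, f x <> MInf) /\ exists x, f x <> PInf.

Definition convex_fun (f : X -> Rbar) : Prop :=
  forall x y t a b, 0 <= t <= 1 -> f x = Fin a -> f y = Fin b ->
    Rbar_le (f (badd (bscal t x) (bscal (1 - t) y))) (Fin (t * a + (1 - t) * b)).

Definition lsc (f : X -> Rbar) : Prop :=
  forall x c, Rbar_lt (Fin c) (f x) ->
    exists d, 0 < d /\ forall u, bnorm (bsub u x) < d -> Rbar_lt (Fin c) (f u).

Definition Gamma0 (f : X -> Rbar) : Prop := proper f /\ convex_fun f /\ lsc f.

Definition convex_real (p : X -> R) : Prop :=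
  forall x y t, 0 <= t <= 1 ->
    p (badd (bscal t x) (bscal (1 - t) y)) <= t * p x + (1 - t) * p y.

(* subdifferential; empty where f is not finite *)
Definition subdiff (f : X -> Rbar) (x : X) (phi : X -> R) : Prop :=
  is_dual phi /\ exists a, f x = Fin a /\
    forall u, Rbar_le (Fin (a + phi (bsub u x))) (f u).

Definition Sf (f : X -> Rbar) (x : X) : Prop := Rbar_le (f x) (Fin 0).
Definition Sfeq (f : X -> Rbar) (x : X) : Prop := f x = Fin 0.

Definition Er (f : X -> Rbar) : Rbar :=
  Rbar_inf (fun v => exists x, Rbar_lt (Fin 0) (f x) /\
                               v = Rbar_ratio (f x) (dist x (Sf f))).

Definition bd_mod (f : X -> Rbar) : Rbar :=
  Rbar_inf (fun v => exists x, f x = Fin 0 /\ v = dist0 (d_bd (subdiff f x))).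

Definition tau (f : X -> Rbar) (x : X) (eps del : R) : Rbar :=
  if excluded_middle_informative (d_int (subdiff f x) dzero)
  then dist0 (d_bd (subdiff f x))
  else Rbar_inf (fun v => exists u,
          Rbar_le (Fin (- eps * bnorm (bsub u x) - del)) (f u) /\
          v = dist0 (subdiff f u)).

Definition Ptb (f : X -> Rbar) (eps : R) (g : X -> Rbar) : Prop :=
  (exists u, Sf g u) /\
  exists p : X -> R, convex_real p /\ (forall u, g u = Rbar_plus_R (f u) (p u)) /\
  exists x xi, Sfeq f x /\ 0 <= xi /\
    Rbar_diff_le (Rbar_plus_R (bd_mod f) xi) (tau f x xi (Rabs (p x))) eps /\
    forall u, Rabs (p u - p x) <= xi * bnorm (bsub u x).

Definition Ptbw (f : X -> Rbar) (eps : R) (g : X -> Rbar) : Prop :=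
  (exists u, Sf g u) /\
  exists p : X -> R, convex_real p /\ (forall u, g u = Rbar_plus_R (f u) (p u)) /\
  exists x, Sfeq f x /\
    forall u, Rabs (p u - p x) <= eps * bnorm (bsub u x).

Definition Ptbl (f : X -> Rbar) (eps : R) (g : X -> Rbar) : Prop :=
  exists x xi xs, Sfeq f x /\ 0 <= xi /\ is_dual xs /\ Rbar_le (dnorm xs) (Fin xi) /\
    Rbar_diff_le (Rbar_plus_R (bd_mod f) xi) (tau f x xi 0) eps /\
    forall u, g u = Rbar_plus_R (f u) (xs (bsub u x)).

Definition Ptbwl (f : X -> Rbar) (eps : R) (g : X -> Rbar) : Prop :=
  exists x xs, Sfeq f x /\ is_dual xs /\ Rbar_le (dnorm xs) (Fin eps) /\
    forall u, g u = Rbar_plus_R (f u) (xs (bsub u x)).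

Definition ErFam (F : (X -> Rbar) -> Prop) : Rbar :=
  Rbar_inf (fun v => exists g, F g /\ v = Er g).

Definition thr (F : R -> (X -> Rbar) -> Prop) : Rbar :=
  Rbar_inf (fun v => exists e, 0 < e /\ ErFam (F e) = Fin 0 /\ v = Fin e).

End Defs.

(* Main.v *)
Require Import Defs.
From Stdlib Require Import Reals Lra Lia ClassicalEpsilon Classical FunctionalExtensionality List.
Open Scope R_scope.

Lemma Rbar_le_refl a : Rbar_le a a.
Proof. destruct a; simpl; auto; lra. Qed.

Lemma Rbar_le_trans a b c : Rbar_le a b -> Rbar_le b c -> Rbar_le a c.
Proof. destruct a, b, c; simpl; auto; try lra; tauto. Qed.

Lemma Rbar_le_antisym a b : Rbar_le a b -> Rbar_le b a -> a = b.
Proof. destruct a, b; simpl; try tauto; intros; f_equal; lra. Qed.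

Lemma Rbar_le_total a b : Rbar_le a b \/ Rbar_le b a.
Proof. destruct a, b; simpl; auto. lra. Qed.

Lemma Rbar_not_le a b : ~ Rbar_le a b -> Rbar_le b a.
Proof. intro H. destruct (Rbar_le_total a b); tauto. Qed.

Lemma Rbar_le_fin x y : Rbar_le (Fin x) (Fin y) <-> x <= y.
Proof. simpl; tauto. Qed.

Lemma glb_exists (A : Rbar -> Prop) : exists m, is_glb A m.
Proof.
  destruct (classic (A MInf)) as [HM|HM].
  { exists MInf. split.
    - intros; simpl; auto.
    - intros m' Hm'. apply Hm'. auto. }
  destruct (classic (exists r, A (Fin r))) as [[r0 Hr0]|HB].
  2:{ exists PInf. split.
      - intros a Ha. destruct a; simpl; auto. exfalso; apply HB; eauto.
      - intros m' _. destruct m'; simpl; auto. }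
  destruct (classic (exists lb, forall r, A (Fin r) -> lb <= r)) as [[lb Hlb]|HU].
  - set (E := fun y => A (Fin (- y))).
    assert (Hb : bound E).
    { exists (- lb). intros y Hy. unfold E in Hy. specialize (Hlb _ Hy). lra. }
    assert (Hne : exists y, E y).
    { exists (- r0). unfold E. rewrite Ropp_involutive. auto. }
    destruct (completeness E Hb Hne) as [s [Hs1 Hs2]].
    exists (Fin (- s)). split.
    + intros a Ha. destruct a; simpl; auto; try contradiction.
      assert (E (- r)) by (unfold E; rewrite Ropp_involutive; auto).
      specialize (Hs1 _ H). lra.
    + intros m' Hm'. destruct m'; simpl; auto.
      * assert (s <= - r). { apply Hs2. intros y Hy. specialize (Hm' _ Hy). simpl in Hm'. lra. }
        lra.
      * specialize (Hm' _ Hr0). simpl in Hm'. auto.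
  - exists MInf. split.
    + intros; simpl; auto.
    + intros m' Hm'. destruct m'; simpl; auto.
      * apply HU. exists r. intros r1 Hr1. specialize (Hm' _ Hr1). simpl in Hm'. auto.
      * specialize (Hm' _ Hr0). simpl in Hm'. auto.
Qed.

Lemma Rbar_inf_spec A : is_glb A (Rbar_inf A).
Proof.
  unfold Rbar_inf. apply epsilon_spec. apply glb_exists.
Qed.

Lemma Rbar_inf_lb A a : A a -> Rbar_le (Rbar_inf A) a.
Proof. intro H. apply (proj1 (Rbar_inf_spec A)). auto. Qed.

Lemma Rbar_inf_glb A m : (forall a, A a -> Rbar_le m a) -> Rbar_le m (Rbar_inf A).
Proof. intro H. apply (proj2 (Rbar_inf_spec A)). auto. Qed.

Lemma Rbar_inf_empty A : (forall a, ~ A a) -> Rbar_inf A = PInf.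
Proof.
  intro H. apply Rbar_le_antisym. destruct (Rbar_inf A); simpl; auto.
  apply Rbar_inf_glb. intros a Ha. exfalso; eapply H; eauto.
Qed.

Lemma Rbar_le_eps a m : (forall e, m < e -> Rbar_le a (Fin e)) -> Rbar_le a (Fin m).
Proof.
  intro H. destruct a; simpl.
  - destruct (Rle_dec r m); auto. exfalso.
    specialize (H ((r + m)/2) ltac:(lra)). simpl in H. lra.
  - specialize (H (m+1) ltac:(lra)). simpl in H. auto.
  - auto.
Qed.

Lemma Rbar_le_fin_lt a M r : Rbar_le a (Fin M) -> M < r -> Rbar_lt a (Fin r).
Proof.
  intros H1 H2. split.
  - destruct a; simpl in *; auto; lra.
  - intro E. subst. simpl in H1. lra.
Qed.

Lemma Rbar_lt_fin_le a r : Rbar_lt a (Fin r) -> Rbar_le a (Fin r).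
Proof. intros [H _]; auto. Qed.

Definition is_glbR (A : R -> Prop) (m : R) :=
  (forall a, A a -> m <= a) /\ (forall m', (forall a, A a -> m' <= a) -> m' <= m).

Definition Rinf (A : R -> Prop) : R := epsilon (inhabits 0) (is_glbR A).

Lemma Rinf_spec A : (exists a, A a) -> (exists lb, forall a, A a -> lb <= a) ->
  is_glbR A (Rinf A).
Proof.
  intros [a0 Ha0] [lb Hlb]. unfold Rinf. apply epsilon_spec.
  set (E := fun y => A (- y)).
  assert (Hb : bound E).
  { exists (- lb). intros y Hy. unfold E in Hy. specialize (Hlb _ Hy). lra. }
  assert (Hne : exists y, E y).
  { exists (- a0). unfold E. rewrite Ropp_involutive. auto. }
  destruct (completeness E Hb Hne) as [s [Hs1 Hs2]].
  exists (- s). split.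
  - intros a Ha. assert (E (- a)) by (unfold E; rewrite Ropp_involutive; auto).
    specialize (Hs1 _ H). lra.
  - intros m' Hm'. assert (s <= - m'). { apply Hs2. intros y Hy. specialize (Hm' _ Hy). lra. }
    lra.
Qed.

Lemma Rinf_lb A a : (exists lb, forall a, A a -> lb <= a) -> A a -> Rinf A <= a.
Proof. intros H Ha. apply (proj1 (Rinf_spec A (ex_intro _ a Ha) H)). auto. Qed.

Lemma Rinf_glb A m : (exists a, A a) -> (forall a, A a -> m <= a) -> m <= Rinf A.
Proof. intros H1 H2. apply (proj2 (Rinf_spec A H1 (ex_intro _ m H2))). auto. Qed.

Lemma Rinf_approx A e : (exists a, A a) -> (exists lb, forall a, A a -> lb <= a) ->
  0 < e -> exists a, A a /\ a < Rinf A + e.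
Proof.
  intros H1 H2 He. apply NNPP. intro H.
  assert (Rinf A + e <= Rinf A).
  { apply Rinf_glb; auto. intros a Ha. apply Rnot_lt_le. intro. apply H. eauto. }
  lra.
Qed.

Section Vec.
Variable X : Banach.

Lemma add0r (x : X) : badd x bzero = x.
Proof. rewrite badd_comm. apply badd_0l. Qed.

Lemma addrN (x : X) : badd x (bopp x) = bzero.
Proof. rewrite badd_comm. apply badd_oppl. Qed.

Lemma add_cancel (a x y : X) : badd a x = badd a y -> x = y.
Proof.
  intro H. rewrite <- (badd_0l X x), <- (badd_0l X y).
  rewrite <- (badd_oppl X a). rewrite <- !badd_assoc. rewrite H. auto.
Qed.

Lemma scal0 (x : X) : bscal 0 x = bzero.
Proof.
  apply (add_cancel (bscal 0 x)). rewrite add0r. rewrite <- bscal_distr_r.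
  rewrite Rplus_0_r. auto.
Qed.

Lemma scal_0r (a : R) : bscal a (@bzero X) = bzero.
Proof. rewrite <- (scal0 bzero). rewrite bscal_assoc. rewrite Rmult_0_r. auto. Qed.

Lemma opp_scal (x : X) : bopp x = bscal (-1) x.
Proof.
  apply (add_cancel x). rewrite addrN. rewrite <- (bscal_1 X x) at 1.
  rewrite <- bscal_distr_r. replace (1 + -1) with 0 by ring. rewrite scal0; auto.
Qed.

Inductive vexp := VAtom (i : nat) | VZero | VAdd (a b : vexp) | VOpp (a : vexp)
  | VScal (r : R) (a : vexp) | VSub (a b : vexp).

Fixpoint veval (env : list X) (e : vexp) : X :=
  match e with
  | VAtom i => nth i env bzero
  | VZero => bzero
  | VAdd a b => badd (veval env a) (veval env b)
  | VOpp a => bopp (veval env a)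
  | VScal r a => bscal r (veval env a)
  | VSub a b => bsub X (veval env a) (veval env b)
  end.

Fixpoint vcoef (e : vexp) (k : nat) : R :=
  match e with
  | VAtom i => if Nat.eqb k i then 1 else 0
  | VZero => 0
  | VAdd a b => vcoef a k + vcoef b k
  | VOpp a => - vcoef a k
  | VScal r a => r * vcoef a k
  | VSub a b => vcoef a k - vcoef b k
  end.

Fixpoint lcn (env : list X) (c : nat -> R) (s : nat) : X :=
  match env with
  | nil => bzero
  | a :: env' => badd (bscal (c s) a) (lcn env' c (S s))
  end.

Lemma lcn_add env c1 c2 s :
  lcn env (fun k => c1 k + c2 k) s = badd (lcn env c1 s) (lcn env c2 s).
Proof.
  revert s; induction env as [|a env IH]; intro s; simpl.
  - rewrite add0r; auto.
  - rewrite IH, bscal_distr_r.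
    rewrite <- !badd_assoc. f_equal. rewrite !badd_assoc. f_equal. apply badd_comm.
Qed.

Lemma lcn_scal env c r s :
  lcn env (fun k => r * c k) s = bscal r (lcn env c s).
Proof.
  revert s; induction env as [|a env IH]; intro s; simpl.
  - rewrite scal_0r; auto.
  - rewrite IH, bscal_distr_l, bscal_assoc. auto.
Qed.

Lemma lcn_zero env s : lcn env (fun _ => 0) s = bzero.
Proof.
  revert s; induction env as [|a env IH]; intro s; simpl; auto.
  rewrite IH, scal0, add0r. auto.
Qed.

Lemma lcn_ext env c1 c2 s : (forall k, (s <= k)%nat -> (k < s + length env)%nat -> c1 k = c2 k) ->
  lcn env c1 s = lcn env c2 s.
Proof.
  revert s; induction env as [|a env IH]; intros s H; simpl; auto.
  rewrite IH, H; simpl; auto; try lia.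
  intros k Hk1 Hk2. apply H; simpl in *; lia.
Qed.

Lemma lcn_atom env i s :
  lcn env (fun k => if Nat.eqb k (s + i) then 1 else 0) s = nth i env bzero.
Proof.
  revert s i; induction env as [|a env IH]; intros s i; simpl.
  - destruct i; auto.
  - destruct i as [|i].
    + rewrite Nat.add_0_r, Nat.eqb_refl, bscal_1.
      rewrite (lcn_ext env _ (fun _ => 0)). rewrite lcn_zero, add0r; auto.
      intros k Hk _. destruct (Nat.eqb k s) eqn:E; auto.
      apply Nat.eqb_eq in E. lia.
    + rewrite <- (IH (S s) i). replace (s + S i)%nat with (S s + i)%nat by lia.
      destruct (Nat.eqb s (S s + i)) eqn:E.
      * apply Nat.eqb_eq in E. lia.
      * rewrite scal0, badd_0l. auto.
Qed.

Lemma veval_lcn env e : veval env e = lcn env (vcoef e) 0.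
Proof.
  induction e; simpl.
  - rewrite <- (lcn_atom env i 0). simpl. auto.
  - rewrite lcn_zero; auto.
  - rewrite IHe1, IHe2, <- lcn_add. auto.
  - rewrite IHe, opp_scal, <- lcn_scal. apply lcn_ext. intros; ring.
  - rewrite IHe, <- lcn_scal. auto.
  - unfold bsub. rewrite IHe1, IHe2, opp_scal, <- lcn_scal, <- lcn_add.
    apply lcn_ext. intros; ring.
Qed.

Fixpoint allk (n : nat) (P : nat -> Prop) : Prop :=
  match n with O => True | S m => allk m P /\ P m end.

Lemma allk_spec n P : allk n P -> forall k, (k < n)%nat -> P k.
Proof.
  induction n; simpl; intros H k Hk. lia.
  destruct H as [H1 H2]. destruct (Nat.eq_dec k n). subst; auto. apply IHn; auto. lia.
Qed.

Lemma veval_eq env e1 e2 :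
  allk (length env) (fun k => vcoef e1 k = vcoef e2 k) -> veval env e1 = veval env e2.
Proof.
  intro H. rewrite !veval_lcn. apply lcn_ext. intros k _ Hk.
  apply (allk_spec _ _ H). simpl in Hk. lia.
Qed.

End Vec.

Ltac vmem x l :=
  match l with
  | nil => constr:(false)
  | cons x _ => constr:(true)
  | cons _ ?l' => vmem x l'
  end.

Ltac vcollect e l :=
  match e with
  | badd ?a ?b => let l1 := vcollect a l in vcollect b l1
  | bopp ?a => vcollect a l
  | bsub _ ?a ?b => let l1 := vcollect a l in vcollect b l1
  | bscal _ ?a => vcollect a l
  | bzero => l
  | _ => let b := vmem e l in
         match b with true => l | false => constr:(cons e l) end
  end.

Ltac vlookup x l :=
  match l with
  | cons x _ => constr:(O)
  | cons _ ?l' => let n := vlookup x l' in constr:(S n)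
  end.

Ltac vreify e l :=
  match e with
  | badd ?a ?b => let ra := vreify a l in let rb := vreify b l in constr:(VAdd ra rb)
  | bopp ?a => let ra := vreify a l in constr:(VOpp ra)
  | bsub _ ?a ?b => let ra := vreify a l in let rb := vreify b l in constr:(VSub ra rb)
  | bscal ?r ?a => let ra := vreify a l in constr:(VScal r ra)
  | bzero => constr:(VZero)
  | _ => let n := vlookup e l in constr:(VAtom n)
  end.

Ltac vec_eq :=
  match goal with
  | |- @eq (bcar ?X) ?lhs ?rhs =>
    let l0 := constr:(@nil (bcar X)) in
    let l1 := vcollect lhs l0 in
    let l := vcollect rhs l1 in
    let r1 := vreify lhs l in
    let r2 := vreify rhs l in
    change (veval X l r1 = veval X l r2); apply veval_eq; simpl;
    repeat split; ring
  end.



Section Norms.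
Variable X : Banach.
Notation bsub := (bsub X).

Lemma norm0 : bnorm (@bzero X) = 0.
Proof. rewrite <- (scal0 X bzero), bnorm_scal, Rabs_R0. ring. Qed.

Lemma norm_opp (x : X) : bnorm (bopp x) = bnorm x.
Proof. rewrite opp_scal, bnorm_scal. replace (Rabs (-1)) with 1. ring. unfold Rabs; destruct (Rcase_abs (-1)); lra. Qed.

Lemma norm_sub_sym (x y : X) : bnorm (bsub x y) = bnorm (bsub y x).
Proof.
  replace (bsub x y) with (bopp (bsub y x)) by vec_eq. apply norm_opp.
Qed.

Lemma norm_sub_tri (a b c : X) : bnorm (bsub a c) <= bnorm (bsub a b) + bnorm (bsub b c).
Proof.
  replace (bsub a c) with (badd (bsub a b) (bsub b c)) by vec_eq. apply bnorm_triangle.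
Qed.

Lemma norm_subxx (x : X) : bnorm (bsub x x) = 0.
Proof. replace (bsub x x) with (@bzero X) by vec_eq. apply norm0. Qed.

Lemma sub_eq0 (a b : X) : bnorm (bsub a b) = 0 -> a = b.
Proof.
  intro H. apply bnorm_eq0 in H.
  replace a with (badd (bsub a b) b) by vec_eq. rewrite H. apply badd_0l.
Qed.

Lemma norm_nn (x : X) : 0 <= bnorm x.
Proof. apply bnorm_nonneg. Qed.

Definition islin (phi : X -> R) :=
  (forall x y, phi (badd x y) = phi x + phi y) /\ (forall a x, phi (bscal a x) = a * phi x).

Lemma dual_linear phi : is_dual X phi -> islin phi.
Proof. intros [H1 [H2 _]]; split; auto. Qed.

Lemma lin_zero phi : islin phi -> phi bzero = 0.
Proof. intros [_ H]. rewrite <- (scal0 X bzero), H. ring. Qed.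

Lemma lin_opp phi x : islin phi -> phi (bopp x) = - phi x.
Proof. intros [_ H]. rewrite opp_scal, H. ring. Qed.

Lemma lin_sub phi x y : islin phi -> phi (bsub x y) = phi x - phi y.
Proof. intro L. unfold Defs.bsub. rewrite (proj1 L), lin_opp; auto. Qed.

Lemma lin_add phi x y : islin phi -> phi (badd x y) = phi x + phi y.
Proof. intros [H _]; auto. Qed.

Lemma lin_scal phi a x : islin phi -> phi (bscal a x) = a * phi x.
Proof. intros [_ H]; auto. Qed.

Lemma dnorm_le phi M : 0 <= M -> (forall x, Rabs (phi x) <= M * bnorm x) ->
  Rbar_le (dnorm X phi) (Fin M).
Proof. intros H1 H2. apply Rbar_inf_lb. exists M. auto. Qed.

Lemma dnorm_ge0 phi : Rbar_le (Fin 0) (dnorm X phi).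
Proof.
  apply Rbar_inf_glb. intros a [M [-> [HM _]]]. simpl. auto.
Qed.

Lemma dnorm_fin phi : is_dual X phi ->
  exists m, dnorm X phi = Fin m /\ 0 <= m /\ forall x, Rabs (phi x) <= m * bnorm x.
Proof.
  intro Hd. destruct Hd as [Ha [Hs [M HM]]].
  assert (HM' : forall x, Rabs (phi x) <= Rmax M 0 * bnorm x).
  { intro x. eapply Rle_trans. apply HM. apply Rmult_le_compat_r. apply norm_nn. apply Rmax_l. }
  pose proof (dnorm_le phi _ (Rmax_r M 0) HM') as H1.
  pose proof (dnorm_ge0 phi) as H0.
  destruct (dnorm X phi) as [m| |] eqn:E; simpl in H1, H0; try tauto.
  exists m. split; auto. split; auto.
  intro x. destruct (Req_dec (bnorm x) 0) as [Hz|Hz].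
  - apply bnorm_eq0 in Hz. subst.
    assert (phi bzero = 0) as Z by (rewrite <- (scal0 X bzero), Hs; ring).
    rewrite Z, norm0, Rabs_R0. lra.
  - pose proof (norm_nn x).
    apply Rnot_lt_le. intro Hlt.
    assert (Rbar_le (Fin (Rabs (phi x) / bnorm x)) (dnorm X phi)).
    { apply Rbar_inf_glb. intros a [M' [-> [HM1 HM2]]]. simpl.
      apply Rmult_le_reg_r with (bnorm x). lra.
      unfold Rdiv. rewrite Rmult_assoc, Rinv_l, Rmult_1_r; auto. }
    rewrite E in H2. simpl in H2.
    apply (Rmult_le_compat_r (bnorm x)) in H2; [|lra].
    unfold Rdiv in H2. rewrite Rmult_assoc, Rinv_l, Rmult_1_r in H2; auto. lra.
Qed.

Lemma dual_comb a b phi psi : is_dual X phi -> is_dual X psi ->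
  is_dual X (fun x => a * phi x + b * psi x).
Proof.
  intros Hp Hq.
  destruct (dnorm_fin phi Hp) as [m1 [_ [Hm1 B1]]].
  destruct (dnorm_fin psi Hq) as [m2 [_ [Hm2 B2]]].
  destruct Hp as [Ha1 [Hs1 _]]. destruct Hq as [Ha2 [Hs2 _]].
  split; [|split].
  - intros. rewrite Ha1, Ha2. ring.
  - intros. rewrite Hs1, Hs2. ring.
  - exists (Rabs a * m1 + Rabs b * m2). intro x.
    eapply Rle_trans. apply Rabs_triang. rewrite !Rabs_mult.
    specialize (B1 x). specialize (B2 x).
    pose proof (Rabs_pos a). pose proof (Rabs_pos b).
    assert (Rabs a * Rabs (phi x) <= Rabs a * (m1 * bnorm x)) by (apply Rmult_le_compat_l; auto).
    assert (Rabs b * Rabs (psi x) <= Rabs b * (m2 * bnorm x)) by (apply Rmult_le_compat_l; auto).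
    lra.
Qed.

Lemma dual_lin_bound phi L : islin phi -> (forall x, Rabs (phi x) <= L * bnorm x) -> is_dual X phi.
Proof. intros [H1 H2] H3. split; [|split]; eauto. Qed.

Lemma dist_ge0 x S : Rbar_le (Fin 0) (Defs.dist X x S).
Proof. apply Rbar_inf_glb. intros a [u [_ ->]]. simpl. apply norm_nn. Qed.

Lemma dist_le x S u : S u -> Rbar_le (Defs.dist X x S) (Fin (bnorm (bsub u x))).
Proof. intro H. apply Rbar_inf_lb. eauto. Qed.

Lemma dist_fin x S : (exists u, S u) ->
  exists D, Defs.dist X x S = Fin D /\ 0 <= D /\ (forall u, S u -> D <= bnorm (bsub u x)).
Proof.
  intros [u Hu]. pose proof (dist_ge0 x S). pose proof (dist_le x S u Hu).
  destruct (Defs.dist X x S) as [D| |] eqn:E; simpl in *; try tauto.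
  exists D. split; auto. split; auto. intros v Hv. pose proof (dist_le x S v Hv).
  rewrite E in H1. auto.
Qed.

Lemma dist_glb x S m : (forall u, S u -> m <= bnorm (bsub u x)) -> Rbar_le (Fin m) (Defs.dist X x S).
Proof. intro H. apply Rbar_inf_glb. intros a [u [Hu ->]]. simpl. auto. Qed.

End Norms.

Section HB.
Variable X : Banach.
Notation bsub := (bsub X).

Definition sublin (P : X -> R) :=
  (forall x y, P (badd x y) <= P x + P y) /\ (forall s x, 0 < s -> P (bscal s x) <= s * P x).

Lemma sublin_0 P : sublin P -> P bzero = 0.
Proof.
  intros [H1 H2].
  pose proof (H1 bzero bzero) as A. rewrite add0r in A.
  pose proof (H2 (/2) bzero ltac:(lra)) as B. rewrite scal_0r in B. lra.
Qed.

Lemma sublin_hom P s x : sublin P -> 0 < s -> P (bscal s x) = s * P x.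
Proof.
  intros HP Hs. destruct HP as [H1 H2]. apply Rle_antisym; auto.
  pose proof (H2 (/s) (bscal s x) ltac:(apply Rinv_0_lt_compat; auto)) as B.
  rewrite bscal_assoc, Rinv_l, bscal_1 in B by lra.
  apply Rmult_le_reg_l with (/s). apply Rinv_0_lt_compat; auto.
  rewrite <- Rmult_assoc, Rinv_l, Rmult_1_l by lra. auto.
Qed.

Lemma sublin_neg P x : sublin P -> - P (bopp x) <= P x.
Proof.
  intro HP. pose proof (sublin_0 P HP). destruct HP as [H1 _].
  pose proof (H1 x (bopp x)). rewrite addrN in H0. lra.
Qed.

Lemma Rinf_le_sum A B c : (exists a, A a) -> (exists b, B b) ->
  (forall a b, A a -> B b -> c <= a + b) -> c <= Rinf A + Rinf B.
Proof.
  intros HA HB H.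
  assert (c - Rinf B <= Rinf A).
  { apply Rinf_glb; auto. intros a Ha.
    assert (c - a <= Rinf B). { apply Rinf_glb; auto. intros b Hb. specialize (H a b Ha Hb). lra. }
    lra. }
  lra.
Qed.

Lemma Rinf_le_scal A c s : (exists a, A a) -> 0 < s ->
  (forall a, A a -> c <= s * a) -> c <= s * Rinf A.
Proof.
  intros HA Hs H.
  assert (c / s <= Rinf A).
  { apply Rinf_glb; auto. intros a Ha. specialize (H a Ha).
    apply Rmult_le_reg_l with s; auto. unfold Rdiv. rewrite <- Rmult_assoc.
    rewrite (Rmult_comm s c), Rmult_assoc, Rinv_r, Rmult_1_r; lra. }
  apply Rmult_le_compat_l with (r := s) in H0; [|lra].
  unfold Rdiv in H0. rewrite (Rmult_comm c), <- Rmult_assoc, Rinv_r, Rmult_1_l in H0; lra.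
Qed.

Variable Q : X -> R.
Hypothesis HQ : sublin Q.

Definition EE (P : X -> R) := sublin P /\ forall x, P x <= Q x.
Definition le (P1 P2 : X -> R) := forall x, P1 x <= P2 x.
Definition lt (P1 P2 : X -> R) := le P1 P2 /\ ~ le P2 P1.

Lemma EE_low P x : EE P -> - Q (bopp x) <= P x.
Proof. intros [H1 H2]. pose proof (sublin_neg P x H1). specialize (H2 (bopp x)). lra. Qed.

Lemma le_antisym P1 P2 : le P1 P2 -> le P2 P1 -> P1 = P2.
Proof. intros H1 H2. apply functional_extensionality. intro x. apply Rle_antisym; auto. Qed.

Lemma le_trans P1 P2 P3 : le P1 P2 -> le P2 P3 -> le P1 P3.
Proof. intros H1 H2 x. eapply Rle_trans; eauto. Qed.

Lemma le_refl P : le P P.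
Proof. intro; lra. Qed.

Definition chain (C : (X -> R) -> Prop) :=
  forall P1 P2, C P1 -> C P2 -> le P1 P2 \/ le P2 P1.

Definition infC (C : (X -> R) -> Prop) : X -> R :=
  fun x => Rinf (fun r => exists P, C P /\ r = P x).

Lemma infC_ne (C : (X -> R) -> Prop) x : (exists P, C P) -> exists r : R, (fun r => exists P, C P /\ r = P x) r.
Proof. intros [P HP]. exists (P x). eauto. Qed.

Lemma infC_bd C x : (forall P, C P -> EE P) ->
  exists lb, forall r, (fun r => exists P, C P /\ r = P x) r -> lb <= r.
Proof. intro H. exists (- Q (bopp x)). intros r [P [HP ->]]. apply EE_low; auto. Qed.

Lemma infC_lb C P : (forall P, C P -> EE P) -> C P -> le (infC C) P.
Proof. intros H HP x. apply Rinf_lb. apply infC_bd; auto. eauto. Qed.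

Lemma infC_glb C R0 : (exists P, C P) -> (forall P, C P -> le R0 P) -> le R0 (infC C).
Proof.
  intros Hne H x. apply Rinf_glb. apply infC_ne; auto.
  intros r [P [HP ->]]. apply H; auto.
Qed.

Lemma infC_EE C : (exists P, C P) -> chain C -> (forall P, C P -> EE P) -> EE (infC C).
Proof.
  intros Hne Hc HE. split; [split|].
  - intros x y. unfold infC at 1.
    apply Rinf_le_sum; try apply infC_ne; auto.
    intros a b [P1 [H1 ->]] [P2 [H2 ->]].
    destruct (Hc P1 P2 H1 H2) as [L|L].
    + eapply Rle_trans. apply (infC_lb C P1); auto.
      destruct (HE P1 H1) as [[S1 _] _]. eapply Rle_trans. apply S1. specialize (L y). lra.
    + eapply Rle_trans. apply (infC_lb C P2); auto.
      destruct (HE P2 H2) as [[S1 _] _]. eapply Rle_trans. apply S1. specialize (L x). lra.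
  - intros s x Hs. unfold infC at 2. apply Rinf_le_scal; auto. apply infC_ne; auto.
    intros a [P [HP ->]]. eapply Rle_trans. apply (infC_lb C P); auto.
    destruct (HE P HP) as [[_ S2] _]. apply S2; auto.
  - intro x. destruct Hne as [P HP]. eapply Rle_trans. apply (infC_lb C P); auto.
    destruct (HE P HP) as [_ H]. auto.
Qed.

Definition strictP (P P' : X -> R) := EE P' /\ le P' P /\ ~ le P P'.

Definition FF (P : X -> R) : X -> R :=
  match excluded_middle_informative (exists P', strictP P P') with
  | left _ => epsilon (inhabits P) (strictP P)
  | right _ => P
  end.

Lemma FF_le P : le (FF P) P.
Proof.
  unfold FF. destruct excluded_middle_informative as [H|H].
  - pose proof (epsilon_spec (inhabits P) (strictP P) H) as [_ [A _]]. auto.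
  - apply le_refl.
Qed.

Lemma FF_EE P : EE P -> EE (FF P).
Proof.
  unfold FF. destruct excluded_middle_informative as [H|H]; auto.
  pose proof (epsilon_spec (inhabits P) (strictP P) H) as [A _]. auto.
Qed.

Lemma FF_min P : le P (FF P) -> forall P', EE P' -> le P' P -> le P P'.
Proof.
  unfold FF. destruct excluded_middle_informative as [H|H].
  - pose proof (epsilon_spec (inhabits P) (strictP P) H) as [_ [_ A]]. tauto.
  - intros _ P' H1 H2. apply NNPP. intro H3. apply H. exists P'. split; auto.
Qed.

Inductive TT : (X -> R) -> Prop :=
| TT_Q : TT Q
| TT_F : forall P, TT P -> TT (FF P)
| TT_inf : forall C, (forall P, C P -> TT P) -> chain C -> (exists P, C P) -> TT (infC C).

Lemma TT_EE P : TT P -> EE P.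
Proof.
  induction 1.
  - split; auto. intro; lra.
  - apply FF_EE; auto.
  - apply infC_EE; auto.
Qed.

Definition extreme c := forall y, TT y -> lt c y -> le c (FF y).

Lemma L1 c : TT c -> extreme c -> forall y, TT y -> le c y \/ le y (FF c).
Proof.
  intros Tc Ec y Ty. induction Ty as [|y' Ty' IH|C HC IH Hch Hne].
  - left. intro x. apply (proj2 (TT_EE c Tc)).
  - destruct IH as [L|L].
    + destruct (classic (le y' c)) as [L2|L2].
      * assert (y' = c) by (apply le_antisym; auto). subst. right. apply le_refl.
      * left. apply Ec; auto. split; auto.
    + right. eapply le_trans. apply FF_le. auto.
  - destruct (classic (forall P, C P -> le c P)) as [A|A].
    + left. apply infC_glb; auto.
    + right. apply not_all_ex_not in A. destruct A as [P A].
      apply imply_to_and in A. destruct A as [CP A].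
      destruct (IH P CP) as [B|B]; [tauto|].
      eapply le_trans; [|exact B]. apply infC_lb; auto.
      intros; apply TT_EE; auto.
Qed.

Lemma L2 c : TT c -> extreme c.
Proof.
  induction 1 as [|c' Tc' IH|C HC IH Hch Hne].
  - intros y Ty [L1' L2']. exfalso. apply L2'. intro x. apply (proj2 (TT_EE y Ty)).
  - intros y Ty [A B]. destruct (L1 c' Tc' IH y Ty) as [L|L]; [|tauto].
    destruct (classic (le y c')) as [L2'|L2'].
    + assert (y = c') by (apply le_antisym; auto). subst. apply le_refl.
    + eapply le_trans. apply FF_le. apply IH; auto. split; auto.
  - intros y Ty [A B].
    assert (Hex : exists P, C P /\ ~ le y P).
    { apply NNPP. intro N. apply B. apply infC_glb; auto. intros P CP.
      apply NNPP. intro N2. apply N. eauto. }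
    destruct Hex as [P [CP NP]].
    destruct (L1 P (HC P CP) (IH P CP) y Ty) as [L|L].
    + eapply le_trans. apply infC_lb; eauto. intros; apply TT_EE; auto.
      apply IH; auto. split; auto.
    + exfalso. apply NP. eapply le_trans; eauto. apply FF_le.
Qed.

Lemma TT_chain : chain TT.
Proof.
  intros c y Tc Ty. destruct (L1 c Tc (L2 c Tc) y Ty) as [L|L]; auto.
  right. eapply le_trans; eauto. apply FF_le.
Qed.

Lemma exists_minimal : exists P, EE P /\ forall P', EE P' -> le P' P -> le P P'.
Proof.
  set (m := infC TT).
  assert (Tm : TT m) by (apply TT_inf; auto; [apply TT_chain | exists Q; constructor]).
  exists m. split. apply TT_EE; auto.
  apply FF_min. apply infC_lb. intros; apply TT_EE; auto. constructor; auto.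
Qed.

End HB.

Section HB2.
Variable X : Banach.
Notation bsub := (bsub X).

Lemma minimal_linear Q P : sublin X Q -> EE X Q P ->
  (forall P', EE X Q P' -> le X P' P -> le X P P') -> islin X P.
Proof.
  intros HQ HE Hmin.
  assert (HP : sublin X P) by apply HE.
  pose proof (sublin_0 X P HP) as P0.
  assert (Hsup : forall x z, P x + P z <= P (badd x z)).
  { intros x z.
    set (A := fun x r => exists t, 0 <= t /\ r = P (badd x (bscal t z)) - t * P z).
    set (Pz := fun x => Rinf (A x)).
    assert (Ane : forall x, exists r, A x r).
    { intro y. exists (P (badd y (bscal 0 z)) - 0 * P z). exists 0. split; auto; lra. }
    assert (Abd : forall x, exists lb, forall r, A x r -> lb <= r).
    { intro y. exists (- P (bopp y)). intros r [t [Ht ->]].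
      assert (P (bscal t z) = t * P z).
      { destruct (Req_dec t 0) as [E|E]. subst. rewrite scal0, P0. ring.
        apply sublin_hom; auto. lra. }
      assert (P (bscal t z) <= P (badd y (bscal t z)) + P (bopp y)).
      { replace (bscal t z) with (badd (badd y (bscal t z)) (bopp y)) at 1 by vec_eq.
        apply (proj1 HP). }
      lra. }
    assert (HPz : EE X Q Pz).
    { split; [split|].
      - intros x1 x2. unfold Pz at 1. apply Rinf_le_sum; auto.
        intros a b [t1 [H1 ->]] [t2 [H2 ->]].
        apply Rle_trans with (P (badd (badd x1 x2) (bscal (t1 + t2) z)) - (t1 + t2) * P z).
        + apply Rinf_lb; auto. exists (t1 + t2). split; auto. lra.
        + replace (badd (badd x1 x2) (bscal (t1 + t2) z))
            with (badd (badd x1 (bscal t1 z)) (badd x2 (bscal t2 z))) by vec_eq.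
          pose proof (proj1 HP (badd x1 (bscal t1 z)) (badd x2 (bscal t2 z))). lra.
      - intros s y Hs. unfold Pz at 2. apply Rinf_le_scal; auto.
        intros a [t [Ht ->]].
        apply Rle_trans with (P (badd (bscal s y) (bscal (s * t) z)) - (s * t) * P z).
        + apply Rinf_lb; auto. exists (s * t). split; auto. apply Rmult_le_pos; lra.
        + replace (badd (bscal s y) (bscal (s * t) z)) with (bscal s (badd y (bscal t z))) by vec_eq.
          rewrite sublin_hom; auto. lra.
      - intro y. apply Rle_trans with (P y). 2: apply HE.
        apply Rinf_lb; auto. exists 0. split; [lra|]. rewrite scal0, add0r. ring. }
    assert (L : le X Pz P).
    { intro y. apply Rinf_lb; auto. exists 0. split; [lra|]. rewrite scal0, add0r. ring. }
    pose proof (Hmin Pz HPz L x) as H1.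
    assert (Pz x <= P (badd x (bscal 1 z)) - 1 * P z).
    { apply Rinf_lb; auto. exists 1. split; auto; lra. }
    rewrite bscal_1 in H. lra. }
  assert (Hadd : forall x y, P (badd x y) = P x + P y).
  { intros. apply Rle_antisym. apply HP. apply Hsup. }
  assert (Hopp : forall x, P (bopp x) = - P x).
  { intro x. pose proof (Hadd x (bopp x)). rewrite addrN, P0 in H. lra. }
  split; auto.
  intros a x. destruct (Rtotal_order a 0) as [Hn|[Hz|Hp]].
  - replace (bscal a x) with (bopp (bscal (- a) x)) by vec_eq.
    rewrite Hopp, sublin_hom; auto; lra.
  - subst. rewrite scal0, P0. ring.
  - apply sublin_hom; auto.
Qed.

Theorem HB_core Q : sublin X Q -> exists phi, islin X phi /\ forall x, phi x <= Q x.
Proof.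
  intro HQ. destruct (exists_minimal X Q HQ) as [P [HE Hmin]].
  exists P. split. eapply minimal_linear; eauto. apply HE.
Qed.

Theorem norming (v : X) : exists phi, islin X phi /\
  (forall y, Rabs (phi y) <= bnorm y) /\ phi v = bnorm v.
Proof.
  set (A := fun y r => exists t, 0 <= t /\ r = bnorm (badd y (bscal t v)) - t * bnorm v).
  set (Qn := fun y => Rinf (A y)).
  assert (Ane : forall y, exists r, A y r).
  { intro y. exists (bnorm (badd y (bscal 0 v)) - 0 * bnorm v). exists 0. split; auto; lra. }
  assert (Abd : forall y, exists lb, forall r, A y r -> lb <= r).
  { intro y. exists (- bnorm y). intros r [t [Ht ->]].
    assert (bnorm (bscal t v) <= bnorm (badd y (bscal t v)) + bnorm (bopp y)).
    { replace (bscal t v) with (badd (badd y (bscal t v)) (bopp y)) at 1 by vec_eq.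
      apply bnorm_triangle. }
    rewrite bnorm_scal, Rabs_pos_eq, norm_opp in H; auto. lra. }
  assert (HQ : sublin X Qn).
  { split.
    - intros x1 x2. unfold Qn at 1. apply Rinf_le_sum; auto.
      intros a b [t1 [H1 ->]] [t2 [H2 ->]].
      apply Rle_trans with (bnorm (badd (badd x1 x2) (bscal (t1 + t2) v)) - (t1 + t2) * bnorm v).
      + apply Rinf_lb; auto. exists (t1 + t2). split; auto. lra.
      + replace (badd (badd x1 x2) (bscal (t1 + t2) v))
          with (badd (badd x1 (bscal t1 v)) (badd x2 (bscal t2 v))) by vec_eq.
        pose proof (bnorm_triangle X (badd x1 (bscal t1 v)) (badd x2 (bscal t2 v))). lra.
    - intros s y Hs. unfold Qn at 2. apply Rinf_le_scal; auto.
      intros a [t [Ht ->]].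
      apply Rle_trans with (bnorm (badd (bscal s y) (bscal (s * t) v)) - (s * t) * bnorm v).
      + apply Rinf_lb; auto. exists (s * t). split; auto. apply Rmult_le_pos; lra.
      + replace (badd (bscal s y) (bscal (s * t) v)) with (bscal s (badd y (bscal t v))) by vec_eq.
        rewrite bnorm_scal, Rabs_pos_eq; lra. }
  destruct (HB_core Qn HQ) as [phi [Hl Hle]].
  assert (B1 : forall y, phi y <= bnorm y).
  { intro y. eapply Rle_trans. apply Hle. apply Rinf_lb; auto. exists 0. split; [lra|].
    rewrite scal0, add0r. ring. }
  exists phi. split; auto. split.
  - intro y. apply Rabs_le. split; auto.
    pose proof (B1 (bopp y)). rewrite lin_opp, norm_opp in H; auto. lra.
  - apply Rle_antisym; auto.
    assert (phi (bopp v) <= - bnorm v).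
    { eapply Rle_trans. apply Hle. apply Rinf_lb; auto. exists 1. split; [lra|].
      replace (badd (bopp v) (bscal 1 v)) with (@bzero X) by vec_eq. rewrite norm0. ring. }
    rewrite lin_opp in H; auto. lra.
Qed.

End HB2.

Section SG.
Variable X : Banach.
Notation bsub := (bsub X).

Lemma scal_norm_le (a : R) (x : X) : 0 <= a -> bnorm (bscal a x) = a * bnorm x.
Proof. intro H. rewrite bnorm_scal, Rabs_pos_eq; auto. Qed.

Lemma divmul N t : t <> 0 -> N / t * t = N.
Proof. intro; field; auto. Qed.

Theorem subgrad_exists (f : X -> Rbar) v fv L :
  convex_fun X f -> (forall w, f w <> MInf) -> f v = Fin fv -> 0 <= L ->
  (forall w, Rbar_le (Fin (fv - L * bnorm (bsub w v))) (f w)) ->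
  exists phi, is_dual X phi /\ (forall y, Rabs (phi y) <= L * bnorm y) /\
    forall w, Rbar_le (Fin (fv + phi (bsub w v))) (f w).
Proof.
  intros Hc Hm Hv HL Hlow.
  set (A := fun y r => exists t w b, 0 < t /\ f w = Fin b /\
             r = (b - fv + L * bnorm (bsub (bscal t y) (bsub w v))) / t).
  set (Qs := fun y => Rinf (A y)).
  assert (Ane : forall y, exists r, A y r).
  { intro y. eexists. exists 1, v, fv. split; [lra|]. split; eauto. }
  assert (Abd : forall y, exists lb, forall r, A y r -> lb <= r).
  { intro y. exists (- L * bnorm y). intros r [t [w [b [Ht [Hw ->]]]]].
    pose proof (Hlow w) as H1. rewrite Hw in H1. simpl in H1.
    assert (bnorm (bsub w v) <= bnorm (bsub (bscal t y) (bsub w v)) + bnorm (bscal t y)).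
    { rewrite (norm_sub_sym X (bscal t y)).
      replace (bsub w v) with (badd (bsub (bsub w v) (bscal t y)) (bscal t y)) at 1 by vec_eq.
      apply bnorm_triangle. }
    rewrite scal_norm_le in H by lra.
    apply Rmult_le_reg_r with t; auto. rewrite divmul by lra.
    assert (L * bnorm (bsub w v) <= L * (bnorm (bsub (bscal t y) (bsub w v)) + t * bnorm y))
      by (apply Rmult_le_compat_l; auto).
    nra. }
  assert (Elem : forall y t w b, 0 < t -> f w = Fin b ->
            Qs y <= (b - fv + L * bnorm (bsub (bscal t y) (bsub w v))) / t).
  { intros y t w b Ht Hw. apply Rinf_lb; auto. exists t, w, b. auto. }
  assert (HQ : sublin X Qs).
  { split.
    - intros x y. unfold Qs at 2 3. apply Rinf_le_sum; auto.
      intros a c [t1 [w1 [b1 [Ht1 [Hw1 ->]]]]] [t2 [w2 [b2 [Ht2 [Hw2 ->]]]]].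
      set (lam := t2 / (t1 + t2)).
      assert (Hl0 : 0 < lam) by (unfold lam; apply Rdiv_lt_0_compat; lra).
      assert (Hl1 : lam < 1).
      { unfold lam. apply Rmult_lt_reg_r with (t1 + t2). lra. unfold Rdiv.
        rewrite Rmult_assoc, Rinv_l by lra. lra. }
      assert (Heq : (1 - lam) * t2 = lam * t1) by (unfold lam; field; lra).
      set (w := badd (bscal lam w1) (bscal (1 - lam) w2)).
      pose proof (Hc w1 w2 lam b1 b2 ltac:(lra) Hw1 Hw2) as Hcv. fold w in Hcv.
      destruct (f w) as [bw| |] eqn:Ew; simpl in Hcv; try tauto; [|exfalso; eapply Hm; eauto].
      set (V1 := bsub (bscal t1 x) (bsub w1 v)). set (V2 := bsub (bscal t2 y) (bsub w2 v)).
      assert (Hvec : bsub (bscal (lam * t1) (badd x y)) (bsub w v) =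
                     badd (bscal lam V1) (bscal (1 - lam) V2)).
      { rewrite bscal_distr_l. rewrite <- Heq at 2. unfold V1, V2, w. vec_eq. }
      assert (Hn : bnorm (bsub (bscal (lam * t1) (badd x y)) (bsub w v)) <=
                   lam * bnorm V1 + (1 - lam) * bnorm V2).
      { rewrite Hvec. eapply Rle_trans. apply bnorm_triangle.
        rewrite !scal_norm_le by lra. lra. }
      eapply Rle_trans. apply (Elem (badd x y) (lam * t1) w bw); auto. nra.
      apply Rle_trans with ((lam * (b1 - fv + L * bnorm V1) + (1 - lam) * (b2 - fv + L * bnorm V2))
                            / (lam * t1)).
      + unfold Rdiv. apply Rmult_le_compat_r.
        left. apply Rinv_0_lt_compat. nra.
        assert (L * bnorm (bsub (bscal (lam * t1) (badd x y)) (bsub w v)) <=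
                L * (lam * bnorm V1 + (1 - lam) * bnorm V2)) by (apply Rmult_le_compat_l; auto).
        nra.
      + right. unfold lam. field. lra.
    - intros s y Hs. unfold Qs at 2. apply Rinf_le_scal; auto.
      intros a [t [w [b [Ht [Hw ->]]]]].
      eapply Rle_trans. apply (Elem (bscal s y) (t / s) w b); auto.
      apply Rdiv_lt_0_compat; auto.
      rewrite bscal_assoc. replace (t / s * s) with t by (field; lra).
      right. field. lra. }
  destruct (HB_core X Qs HQ) as [phi [Hl Hle]].
  assert (B1 : forall y, phi y <= L * bnorm y).
  { intro y. eapply Rle_trans. apply Hle. eapply Rle_trans. apply (Elem y 1 v fv); auto; lra.
    replace (bsub (bscal 1 y) (bsub v v)) with y by vec_eq. right; field. }
  assert (B2 : forall y, Rabs (phi y) <= L * bnorm y).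
  { intro y. apply Rabs_le. split; auto.
    pose proof (B1 (bopp y)). rewrite lin_opp, norm_opp in H; auto. lra. }
  exists phi. split; [|split]; auto.
  - eapply dual_lin_bound; eauto.
  - intro w. destruct (f w) as [b| |] eqn:Ew; simpl; auto; [|exfalso; eapply Hm; eauto].
    pose proof (Hle (bsub w v)). pose proof (Elem (bsub w v) 1 w b ltac:(lra) Ew).
    replace (bsub (bscal 1 (bsub w v)) (bsub w v)) with (@bzero X) in H0 by vec_eq.
    rewrite norm0 in H0. replace ((b - fv + L * 0) / 1) with (b - fv) in H0 by field. lra.
Qed.

End SG.

Lemma eps_n e : 0 < e -> exists n, / INR (S n) < e.
Proof.
  intro He. destruct (archimed_cor1 e He) as [N [H1 H2]].
  destruct N. lia. exists N. auto.
Qed.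

Lemma einv_pos n : 0 < / INR (S n).
Proof. apply Rinv_0_lt_compat. apply lt_0_INR. lia. Qed.

Lemma einv_mono n k : (n <= k)%nat -> / INR (S k) <= / INR (S n).
Proof.
  intro H. apply Rinv_le_contravar. apply lt_0_INR; lia. apply le_INR. lia.
Qed.

Lemma small_le0 x C : (forall n, x <= C * / INR (S n)) -> x <= 0.
Proof.
  intro H. apply Rnot_lt_le. intro Hx.
  assert (HC : 0 < C). { specialize (H O). simpl in H. nra. }
  destruct (eps_n (x / C)) as [n Hn]. apply Rdiv_lt_0_compat; auto.
  specialize (H n). apply (Rmult_lt_compat_l C) in Hn; auto.
  unfold Rdiv in Hn. rewrite <- Rmult_assoc, (Rmult_comm C x), Rmult_assoc, Rinv_r, Rmult_1_r in Hn; lra.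
Qed.

Lemma Rbar_lt_slack c a : Rbar_lt (Fin c) a -> exists m, 0 < m /\ Rbar_lt (Fin (c + m)) a.
Proof.
  intros [H1 H2]. destruct a as [r| |]; simpl in *.
  - exists ((r - c)/2). assert (c <> r) by (intro; subst; auto).
    split. lra. split. simpl. lra. intro E. inversion E. lra.
  - exists 1. split. lra. split. simpl; auto. discriminate.
  - tauto.
Qed.

Section Ek.
Variable X : Banach.
Notation bsub := (bsub X).

Theorem ekeland (h : X -> Rbar) (u0 : X) (a0 kap : R) :
  (forall w, Rbar_le (Fin 0) (h w)) -> lsc X h -> h u0 = Fin a0 -> 0 < kap ->
  exists v a, h v = Fin a /\ a + kap * bnorm (bsub v u0) <= a0 /\
    forall w, Rbar_le (Fin (a - kap * bnorm (bsub w v))) (h w).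
Proof.
  intros Hpos Hlsc Hu0 Hk.
  set (hr := fun w => match h w with Fin b => b | _ => 0 end).
  set (SS := fun y w => h w = Fin (hr w) /\ hr w + kap * bnorm (bsub w y) <= hr y).
  assert (hr_nn : forall w, h w = Fin (hr w) -> 0 <= hr w).
  { intros w E. pose proof (Hpos w). rewrite E in H. auto. }
  set (mm := fun y => Rinf (fun r => exists w, SS y w /\ r = hr w)).
  assert (SS_refl : forall y, h y = Fin (hr y) -> SS y y).
  { intros y E. split; auto. rewrite norm_subxx. lra. }
  assert (mm_bd : forall y, exists lb, forall r, (fun r => exists w, SS y w /\ r = hr w) r -> lb <= r).
  { intro y. exists 0. intros r [w [[E _] ->]]. auto. }
  assert (mm_lb : forall y w, SS y w -> mm y <= hr w).
  { intros y w H. apply Rinf_lb; eauto. }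
  set (nxt := fun y n => epsilon (inhabits y) (fun w => SS y w /\ hr w <= mm y + / INR (S n))).
  assert (nxt_spec : forall y n, h y = Fin (hr y) ->
            SS y (nxt y n) /\ hr (nxt y n) <= mm y + / INR (S n)).
  { intros y n E. unfold nxt. apply epsilon_spec.
    destruct (Rinf_approx (fun r => exists w, SS y w /\ r = hr w) (/ INR (S n)))
      as [r [[w [Hw ->]] Hr]]; eauto. apply einv_pos.
    exists w. split; auto. fold (mm y) in Hr. lra. }
  assert (SS_trans : forall y y' w, SS y y' -> SS y' w -> SS y w).
  { intros y y' w [E1 H1] [E2 H2]. split; auto.
    pose proof (norm_sub_tri X w y' y). nra. }
  set (ys := fix ys (n : nat) : X := match n with O => u0 | S k => nxt (ys k) k end).
  assert (fin_ys : forall n, h (ys n) = Fin (hr (ys n))).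
  { induction n; simpl.
    - unfold hr. rewrite Hu0. auto.
    - apply (nxt_spec (ys n) n IHn). }
  assert (step : forall n, SS (ys n) (ys (S n))).
  { intro n. apply (nxt_spec (ys n) n (fin_ys n)). }
  assert (nested : forall n k, SS (ys n) (ys (k + n)%nat)).
  { intros n k. induction k; simpl. apply SS_refl; auto.
    eapply SS_trans; eauto. }
  assert (nested' : forall n p, (n <= p)%nat -> SS (ys n) (ys p)).
  { intros n p H. replace p with ((p - n) + n)%nat by lia. apply nested. }
  assert (small : forall n w, SS (ys (S n)) w -> kap * bnorm (bsub w (ys (S n))) <= / INR (S n)).
  { intros n w H.
    assert (H0 : SS (ys n) w) by (eapply SS_trans; eauto).
    pose proof (mm_lb _ _ H0). pose proof (nxt_spec (ys n) n (fin_ys n)) as [_ H2].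
    destruct H as [_ H]. change (nxt (ys n) n) with (ys (S n)) in H2. lra. }
  assert (Cauchy : forall e, 0 < e -> exists N, forall p q, (N <= p)%nat -> (N <= q)%nat ->
            bnorm (badd (ys p) (bopp (ys q))) < e).
  { intros e He. destruct (eps_n (e * kap / 2)) as [n Hn].
    { apply Rdiv_lt_0_compat; nra. }
    exists (S n). intros p q Hp Hq.
    pose proof (small n (ys p) (nested' _ _ Hp)).
    pose proof (small n (ys q) (nested' _ _ Hq)).
    change (badd (ys p) (bopp (ys q))) with (bsub (ys p) (ys q)).
    pose proof (norm_sub_tri X (ys p) (ys (S n)) (ys q)).
    rewrite (norm_sub_sym X (ys (S n)) (ys q)) in H1.
    assert (kap * bnorm (bsub (ys p) (ys q)) < e * kap) by nra.
    nra. }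
  destruct (bcomplete X ys Cauchy) as [v Hv].
  assert (closed : forall n, SS (ys n) v).
  { intro n. apply NNPP. intro NS.
    set (c0 := hr (ys n) - kap * bnorm (bsub v (ys n))).
    assert (Hlt : Rbar_lt (Fin c0) (h v)).
    { destruct (h v) as [b| |] eqn:E.
      - split. simpl. apply Rnot_lt_le. intro Hb. apply NS. split.
        unfold hr; rewrite E; auto. unfold hr at 1. rewrite E. unfold c0 in Hb. lra.
        intro Q. inversion Q. subst. apply NS. split. unfold hr; rewrite E; auto.
        unfold hr at 1; rewrite E. unfold c0. lra.
      - split. simpl; auto. discriminate.
      - pose proof (Hpos v). rewrite E in H. simpl in H. tauto. }
    destruct (Rbar_lt_slack _ _ Hlt) as [m0 [Hm0 Hlt2]].
    destruct (Hlsc v (c0 + m0) Hlt2) as [d [Hd Hball]].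
    destruct (Hv (Rmin d (m0 / kap))) as [N HN].
    { apply Rmin_pos; auto. apply Rdiv_lt_0_compat; auto. }
    set (k := Nat.max N n).
    specialize (HN k ltac:(lia)). change (badd (ys k) (bopp v)) with (bsub (ys k) v) in HN.
    assert (Hk1 : bnorm (bsub (ys k) v) < d) by (pose proof (Rmin_l d (m0/kap)); lra).
    assert (Hk2 : kap * bnorm (bsub (ys k) v) < m0).
    { pose proof (Rmin_r d (m0/kap)).
      assert (bnorm (bsub (ys k) v) < m0 / kap) by lra.
      apply (Rmult_lt_compat_l kap) in H0; auto.
      unfold Rdiv in H0. rewrite <- Rmult_assoc, (Rmult_comm kap m0), Rmult_assoc, Rinv_r, Rmult_1_r in H0; lra. }
    specialize (Hball (ys k) Hk1).
    destruct (nested' n k ltac:(lia)) as [Ek Hkk]. rewrite Ek in Hball.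
    destruct Hball as [Hb _]. simpl in Hb.
    pose proof (norm_sub_tri X v (ys k) (ys n)).
    rewrite (norm_sub_sym X v (ys k)) in H.
    unfold c0 in Hb. nra. }
  destruct (closed O) as [Ev Hv0]. simpl in Hv0.
  assert (hru0 : hr u0 = a0) by (unfold hr; rewrite Hu0; auto).
  exists v, (hr v). split; auto. split. lra.
  intro w. apply NNPP. intro NL.
  destruct (h w) as [b| |] eqn:Ew.
  - simpl in NL. assert (Hb : b < hr v - kap * bnorm (bsub w v)) by lra.
    assert (Hw : SS v w).
    { split. unfold hr; rewrite Ew; auto. unfold hr at 1; rewrite Ew. lra. }
    assert (Hz : bnorm (bsub w v) <= 0).
    { apply small_le0 with (C := 2 / kap). intro n.
      pose proof (small n w (SS_trans _ _ _ (closed (S n)) Hw)).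
      pose proof (small n v (closed (S n))).
      pose proof (norm_sub_tri X w (ys (S n)) v).
      rewrite (norm_sub_sym X (ys (S n)) v) in H1.
      apply Rmult_le_reg_l with kap; auto.
      replace (kap * (2 / kap * / INR (S n))) with (2 * / INR (S n)) by (field; repeat split; first [lra | apply not_0_INR; lia]).
      nra. }
    pose proof (norm_nn X (bsub w v)).
    assert (w = v) by (apply sub_eq0; lra). subst w.
    rewrite Ev in Ew. inversion Ew. rewrite norm_subxx in Hb. lra.
  - apply NL. simpl. auto.
  - pose proof (Hpos w). rewrite Ew in H. simpl in H. tauto.
Qed.

End Ek.

Section Easy.
Variable X : Banach.
Notation bsub := (bsub X).

Lemma Er_ge0 g : Rbar_le (Fin 0) (Er X g).
Proof.
  apply Rbar_inf_glb. intros a [x [[Hx1 Hx2] ->]].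
  destruct (g x) as [r| |]; simpl in *; auto.
  pose proof (dist_ge0 X x (Sf X g)).
  assert (r <> 0) by (intro E; subst; auto).
  destruct (Defs.dist X x (Sf X g)) as [y| |]; simpl in *; try lra.
  apply Rmult_le_pos. lra. destruct (Req_dec y 0). subst. rewrite Rinv_0. lra.
  left. apply Rinv_0_lt_compat. lra.
Qed.

Lemma ErFam_ge0 F : Rbar_le (Fin 0) (ErFam X F).
Proof. apply Rbar_inf_glb. intros a [g [_ ->]]. apply Er_ge0. Qed.

Lemma ErFam_mono (F G : (X -> Rbar) -> Prop) : (forall g, G g -> F g) ->
  Rbar_le (ErFam X F) (ErFam X G).
Proof.
  intro H. apply Rbar_inf_glb. intros a [g [Hg ->]]. apply Rbar_inf_lb. eauto.
Qed.

Lemma thr_mono (F G : R -> (X -> Rbar) -> Prop) :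
  (forall e g, 0 < e -> G e g -> F e g) -> Rbar_le (thr X F) (thr X G).
Proof.
  intro H. apply Rbar_inf_glb. intros a [e [He [HE ->]]]. apply Rbar_inf_lb.
  exists e. split; auto. split; auto. apply Rbar_le_antisym.
  - rewrite <- HE. apply ErFam_mono. intros; apply H; auto.
  - apply ErFam_ge0.
Qed.

Lemma lin_p_props xs x : is_dual X xs ->
  convex_real X (fun u => xs (bsub u x)) /\ xs (bsub x x) = 0.
Proof.
  intro Hd. pose proof (dual_linear X xs Hd) as L. split.
  - intros a b t Ht. rewrite !lin_sub, !lin_add, !lin_scal by auto. right. ring.
  - replace (bsub x x) with (@bzero X) by vec_eq. apply lin_zero; auto.
Qed.

Lemma part1_incl f e g : Ptbwl X f e g -> Ptbw X f e g.
Proof.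
  intros [x [xs [Hx [Hd [Hn Hg]]]]].
  destruct (lin_p_props xs x Hd) as [Hc H0].
  destruct (dnorm_fin X xs Hd) as [m [Em [Hm B]]]. rewrite Em in Hn. simpl in Hn.
  split.
  - exists x. unfold Sf. rewrite Hg, Hx, H0. simpl. lra.
  - exists (fun u => xs (bsub u x)). split; auto. split; auto.
    exists x. split; auto. intro u. rewrite H0, Rminus_0_r.
    eapply Rle_trans. apply B. apply Rmult_le_compat_r; auto. apply norm_nn.
Qed.

Lemma part4_incl f e g : Ptbl X f e g -> Ptb X f e g.
Proof.
  intros [x [xi [xs [Hx [Hxi [Hd [Hn [Hdiff Hg]]]]]]]].
  destruct (lin_p_props xs x Hd) as [Hc H0].
  destruct (dnorm_fin X xs Hd) as [m [Em [Hm B]]]. rewrite Em in Hn. simpl in Hn.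
  split.
  - exists x. unfold Sf. rewrite Hg, Hx, H0. simpl. lra.
  - exists (fun u => xs (bsub u x)). split; auto. split; auto.
    exists x, xi. split; auto. split; auto. split.
    + rewrite H0, Rabs_R0. auto.
    + intro u. rewrite H0, Rminus_0_r.
      eapply Rle_trans. apply B. apply Rmult_le_compat_r; auto. apply norm_nn.
Qed.

Lemma dnorm_lt_bound z r : is_dual X z -> Rbar_lt (dnorm X z) (Fin r) ->
  exists d, d < r /\ 0 <= d /\ forall v, Rabs (z v) <= d * bnorm v.
Proof.
  intros Hd [Hl Hne]. destruct (dnorm_fin X z Hd) as [m [Em [Hm B]]].
  rewrite Em in Hl, Hne. simpl in Hl. exists m. split; auto.
  destruct Hl; auto. subst. tauto.
Qed.

Lemma dual_dsub a b : is_dual X a -> is_dual X b -> is_dual X (dsub X a b).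
Proof.
  intros Ha Hb. replace (dsub X a b) with (fun v => 1 * a v + -1 * b v).
  apply dual_comb; auto. apply functional_extensionality; intro v. unfold dsub. ring.
Qed.

Lemma part2 f : (forall w, f w <> MInf) -> Rbar_le (thr X (Ptbwl X f)) (bd_mod X f).
Proof.
  intro Hm.
  apply Rbar_inf_glb. intros a [x [Hx ->]]. apply Rbar_inf_glb.
  intros a' [xst [Hd [Hbd ->]]].
  destruct (dnorm_fin X xst Hd) as [m [Em [Hm0 Bm]]]. rewrite Em.
  apply Rbar_le_eps. intros e He. apply Rbar_inf_lb. exists e. split; [lra|]. split; auto.
  apply Rbar_le_antisym; [|apply ErFam_ge0].
  apply Rbar_le_eps. intros eta Heta.
  set (del := Rmin ((e - m) / 3) (eta / 5)).
  assert (Hdel : 0 < del) by (apply Rmin_pos; lra).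
  assert (Hdel1 : del <= (e - m) / 3) by apply Rmin_l.
  assert (Hdel2 : del <= eta / 5) by apply Rmin_r.
  destruct Hbd as [[_ Hcl] Hni].
  destruct (Hcl del Hdel) as [psi [Hpd [Hps Hpl]]].
  assert (Hy : exists yst, is_dual X yst /\ Rbar_lt (dnorm X (dsub X yst xst)) (Fin del) /\
                 ~ subdiff X f x yst).
  { apply NNPP. intro N. apply Hni. split; auto. exists del. split; auto.
    intros ps Hps1 Hps2. apply NNPP. intro N2. apply N. eauto. }
  destruct Hy as [yst [Hyd [Hyl Hyn]]].
  destruct (dnorm_lt_bound _ _ (dual_dsub psi xst Hpd Hd) Hpl) as [d1 [Hd1 [Hd1' B1']]].
  destruct (dnorm_lt_bound _ _ (dual_dsub yst xst Hyd Hd) Hyl) as [d2 [Hd2 [Hd2' B2']]].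
  unfold dsub in B1', B2'.
  set (xs := fun v => 1 * yst v + (-2) * psi v).
  assert (Hxsd : is_dual X xs) by (apply dual_comb; auto).
  assert (Hxsn : Rbar_le (dnorm X xs) (Fin e)).
  { apply dnorm_le. lra. intro v. unfold xs.
    replace (1 * yst v + -2 * psi v) with ((yst v - xst v) - 2 * (psi v - xst v) - xst v) by ring.
    specialize (B1' v). specialize (B2' v). specialize (Bm v).
    pose proof (norm_nn X v).
    eapply Rle_trans. apply Rabs_triang. rewrite Rabs_Ropp.
    eapply Rle_trans. apply Rplus_le_compat_r. apply Rabs_triang. rewrite Rabs_Ropp, Rabs_mult.
    replace (Rabs 2) with 2 by (rewrite Rabs_pos_eq; lra). nra. }
  set (g := fun u => Rbar_plus_R (f u) (xs (bsub u x))).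
  assert (Hg : Ptbwl X f e g).
  { exists x, xs. split; auto. }
  destruct (Hps) as [_ [a0 [Ha0 Hsub]]]. rewrite Hx in Ha0. inversion Ha0. subst a0.
  assert (Hw : exists w b, f w = Fin b /\ yst (bsub w x) > b).
  { apply NNPP. intro N. apply Hyn. split; auto. exists 0. split; auto.
    intro u. destruct (f u) as [b| |] eqn:Eu; simpl; auto.
    - apply Rnot_lt_le. intro Hl. apply N. exists u, b. split; auto. lra.
    - exfalso; eapply Hm; eauto. }
  destruct Hw as [w [b [Hfw Hb]]].
  pose proof (dual_linear X psi Hpd) as Lp. pose proof (dual_linear X yst Hyd) as Ly.
  pose proof (dual_linear X xs Hxsd) as Lx.
  assert (Hpw : psi (bsub w x) <= b).
  { specialize (Hsub w). rewrite Hfw in Hsub. simpl in Hsub. lra. }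
  set (k := yst (bsub w x) - psi (bsub w x)).
  assert (Hk : 0 < k) by (unfold k; lra).
  set (gw := b + xs (bsub w x)).
  assert (Egw : g w = Fin gw) by (unfold g; rewrite Hfw; auto).
  assert (Hgw1 : k <= gw) by (unfold gw, xs, k; lra).
  assert (Hgw2 : gw < 2 * k) by (unfold gw, xs, k; lra).
  assert (HSx : Sf X g x).
  { unfold Sf, g. rewrite Hx. replace (bsub x x) with (@bzero X) by vec_eq.
    rewrite lin_zero; auto. simpl. lra. }
  destruct (dist_fin X w (Sf X g) (ex_intro _ x HSx)) as [D [ED [HD0 HD]]].
  assert (Hlow : Rbar_le (Fin (k / (2 * del))) (Defs.dist X w (Sf X g))).
  { apply dist_glb. intros u Hu. unfold Sf, g in Hu.
    destruct (f u) as [c| |] eqn:Eu; simpl in Hu; try tauto; [|exfalso; eapply Hm; eauto].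
    pose proof (Hsub u) as Hpu. rewrite Eu in Hpu. simpl in Hpu.
    assert (Hz : yst (bsub u x) - psi (bsub u x) <= 0) by (unfold xs in Hu; lra).
    assert (Hdiff : k - (yst (bsub u x) - psi (bsub u x)) =
                    yst (bsub w u) - psi (bsub w u)).
    { unfold k. rewrite !lin_sub by auto. ring. }
    assert (Habs : Rabs (yst (bsub w u) - psi (bsub w u)) <= (d1 + d2) * bnorm (bsub w u)).
    { replace (yst (bsub w u) - psi (bsub w u)) with
        ((yst (bsub w u) - xst (bsub w u)) - (psi (bsub w u) - xst (bsub w u))) by ring.
      eapply Rle_trans. apply Rabs_triang. rewrite Rabs_Ropp.
      specialize (B1' (bsub w u)). specialize (B2' (bsub w u)). lra. }
    rewrite norm_sub_sym in Habs.
    pose proof (norm_nn X (bsub u w)).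
    pose proof (Rle_abs (yst (bsub w u) - psi (bsub w u))) as Habs2.
    assert (k <= 2 * del * bnorm (bsub u w)) by nra.
    apply Rmult_le_reg_l with (2 * del). lra. unfold Rdiv.
    rewrite <- Rmult_assoc, (Rmult_comm (2 * del) k), Rmult_assoc, Rinv_r, Rmult_1_r by lra. lra. }
  rewrite ED in Hlow. simpl in Hlow.
  assert (HDpos : 0 < D).
  { eapply Rlt_le_trans; [|exact Hlow]. apply Rdiv_lt_0_compat; lra. }
  assert (HkD : k <= 2 * del * D).
  { apply Rmult_le_compat_l with (r := 2 * del) in Hlow; [|lra].
    unfold Rdiv in Hlow. rewrite <- Rmult_assoc, (Rmult_comm (2 * del) k), Rmult_assoc, Rinv_r, Rmult_1_r in Hlow by lra. lra. }
  eapply Rbar_le_trans. apply (Rbar_inf_lb _ (Er X g)). exists g. split; auto.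
  eapply Rbar_le_trans. apply Rbar_inf_lb. exists w. split.
  - rewrite Egw. split. simpl. lra. intro E. inversion E. lra.
  - reflexivity.
  - rewrite Egw, ED. simpl.
    apply Rmult_le_reg_r with D; auto. replace (gw / D * D) with gw by (field; lra). nra.
Qed.

End Easy.

Section Hard.
Variable X : Banach.
Notation bsub := (bsub X).

Lemma plip (p : X -> R) x xi : 0 <= xi -> convex_real X p ->
  (forall u, Rabs (p u - p x) <= xi * bnorm (bsub u x)) ->
  forall v w, p w - p v <= xi * bnorm (bsub w v).
Proof.
  intros Hxi Hc Hl v w. apply Rnot_lt_le. intro Hlt.
  set (del := p w - p v - xi * bnorm (bsub w v)).
  assert (Hdel : 0 < del) by (unfold del; lra).
  pose proof (norm_nn X (bsub v x)) as Nvx.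
  set (s := 1 + 2 * xi * bnorm (bsub v x) / del).
  assert (Hs : 1 <= s).
  { unfold s. assert (0 <= 2 * xi * bnorm (bsub v x) / del).
    { unfold Rdiv. apply Rmult_le_pos. nra. left; apply Rinv_0_lt_compat; auto. } lra. }
  assert (Hsdel : s * del = del + 2 * xi * bnorm (bsub v x)) by (unfold s; field; lra).
  set (z := badd v (bscal s (bsub w v))).
  assert (Hinv : bscal (/ s) (bscal s (bsub w v)) = bsub w v).
  { rewrite bscal_assoc, Rinv_l, bscal_1; auto; lra. }
  assert (Hw : badd (bscal (/ s) z) (bscal (1 - / s) v) = w).
  { transitivity (badd v (bscal (/ s) (bscal s (bsub w v)))). unfold z; vec_eq.
    rewrite Hinv. vec_eq. }
  assert (Hs0 : 0 < / s) by (apply Rinv_0_lt_compat; lra).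
  assert (Hs1 : / s <= 1) by (rewrite <- Rinv_1; apply Rinv_le_contravar; lra).
  pose proof (Hc z v (/ s) ltac:(lra)) as Hcv. rewrite Hw in Hcv.
  assert (Hcv2 : s * p w <= p z + (s - 1) * p v).
  { apply Rmult_le_compat_l with (r := s) in Hcv; [|lra].
    replace (s * (/ s * p z + (1 - / s) * p v)) with (p z + (s - 1) * p v) in Hcv by (field; lra).
    auto. }
  assert (Hz : p z <= p x + xi * (s * bnorm (bsub w v) + bnorm (bsub v x))).
  { pose proof (Hl z) as H. pose proof (Rle_abs (p z - p x)).
    pose proof (norm_sub_tri X z v x).
    replace (bsub z v) with (bscal s (bsub w v)) in H1 by (unfold z; vec_eq).
    rewrite bnorm_scal, Rabs_pos_eq in H1 by lra.
    assert (xi * bnorm (bsub z x) <= xi * (s * bnorm (bsub w v) + bnorm (bsub v x)))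
      by (apply Rmult_le_compat_l; auto). lra. }
  assert (Hv : p x - xi * bnorm (bsub v x) <= p v).
  { pose proof (Hl v). pose proof (Rle_abs (- (p v - p x))). rewrite Rabs_Ropp in H0. lra. }
  assert (s * del <= 2 * xi * bnorm (bsub v x)).
  { unfold del. nra. }
  lra.
Qed.

Lemma Rbar_plus_fin a r s : Rbar_plus_R a r = Fin s -> a = Fin (s - r).
Proof. destruct a; simpl; intro H; inversion H. f_equal. ring. Qed.

Section G.
Variable f : X -> Rbar.
Variable p : X -> R.
Variable g : X -> Rbar.
Variable xi : R.
Hypothesis Hxi : 0 <= xi.
Hypothesis Hfm : forall w, f w <> MInf.
Hypothesis Hfc : convex_fun X f.
Hypothesis Hfl : lsc X f.
Hypothesis Hpc : convex_real X p.
Hypothesis Hpl : forall v w, p w - p v <= xi * bnorm (bsub w v).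
Hypothesis Hgp : forall u, g u = Rbar_plus_R (f u) (p u).

Lemma g_notm w : g w <> MInf.
Proof. rewrite Hgp. destruct (f w) eqn:E; simpl; try discriminate. exfalso; eapply Hfm; eauto. Qed.

Lemma g_lsc : lsc X g.
Proof.
  intros u c Hlt. rewrite Hgp in Hlt.
  assert (Hs : exists m, 0 < m /\ Rbar_lt (Fin (c - p u + m)) (f u)).
  { destruct (f u) as [a| |] eqn:E; simpl in Hlt.
    - destruct Hlt as [H1 H2]. simpl in H1. assert (c <> a + p u) by (intro; subst; auto).
      exists ((a + p u - c) / 2). split. lra. split. simpl. lra. intro Q. inversion Q. lra.
    - exists 1. split. lra. split. simpl; auto. discriminate.
    - destruct Hlt as [H1 _]. simpl in H1. tauto. }
  destruct Hs as [m [Hm Hfu]].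
  destruct (Hfl u _ Hfu) as [d [Hd Hball]].
  exists (Rmin d (m / (xi + 1))). split.
  { apply Rmin_pos; auto. apply Rdiv_lt_0_compat; lra. }
  intros w Hw. rewrite Hgp.
  assert (Hw1 : bnorm (bsub w u) < d) by (pose proof (Rmin_l d (m / (xi + 1))); lra).
  assert (Hw2 : bnorm (bsub w u) < m / (xi + 1)) by (pose proof (Rmin_r d (m / (xi + 1))); lra).
  assert (Hpw : p u - p w < m).
  { pose proof (Hpl w u). rewrite norm_sub_sym in H.
    assert (xi * bnorm (bsub w u) < m).
    { apply Rle_lt_trans with ((xi + 1) * bnorm (bsub w u)).
      pose proof (norm_nn X (bsub w u)). nra.
      apply Rmult_lt_compat_l with (r := xi + 1) in Hw2; [|lra].
      replace ((xi + 1) * (m / (xi + 1))) with m in Hw2 by (field; lra). auto. }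
    lra. }
  specialize (Hball w Hw1). destruct (f w) as [a| |] eqn:E; simpl in *.
  - destruct Hball as [H1 _]. simpl in H1. split. simpl. lra. intro Q. inversion Q. lra.
  - split. simpl; auto. discriminate.
  - destruct Hball as [H1 _]. simpl in H1. tauto.
Qed.

Lemma g_convex : convex_fun X g.
Proof.
  intros x y t a b Ht Hx Hy. rewrite Hgp in *.
  apply Rbar_plus_fin in Hx. apply Rbar_plus_fin in Hy.
  pose proof (Hfc x y t _ _ Ht Hx Hy). pose proof (Hpc x y t Ht).
  destruct (f (badd (bscal t x) (bscal (1 - t) y))); simpl in *; auto. nra.
Qed.

End G.
End Hard.

Section Ball.
Variable X : Banach.
Notation bsub := (bsub X).

Lemma dual_scale t phi : is_dual X phi -> is_dual X (fun v => t * phi v).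
Proof.
  intro H. replace (fun v => t * phi v) with (fun v => t * phi v + 0 * phi v).
  apply dual_comb; auto. apply functional_extensionality; intro; ring.
Qed.

Lemma ball_in (S : (X -> R) -> Prop) T phi m :
  d_int X S (dzero X) ->
  (forall chi, is_dual X chi -> d_bd X S chi -> Rbar_le (Fin T) (dnorm X chi)) ->
  is_dual X phi -> Rbar_le (dnorm X phi) (Fin m) -> m < T -> S phi.
Proof.
  intros Hint HT Hphi Hm HmT. apply NNPP. intro NS.
  destruct (dnorm_fin X phi Hphi) as [mp [Emp [Hmp0 Bp]]].
  rewrite Emp in Hm. simpl in Hm.
  destruct Hint as [_ [r0 [Hr0 Hball]]].
  set (sc := fun t => fun v => t * phi v).
  assert (Dsc : forall t, is_dual X (sc t)) by (intro; apply dual_scale; auto).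
  assert (Hdist : forall t t', Rbar_le (dnorm X (dsub X (sc t) (sc t'))) (Fin (Rabs (t - t') * mp))).
  { intros t t'. apply dnorm_le. apply Rmult_le_pos; auto. apply Rabs_pos.
    intro v. unfold dsub, sc. replace (t * phi v - t' * phi v) with ((t - t') * phi v) by ring.
    rewrite Rabs_mult. rewrite Rmult_assoc. apply Rmult_le_compat_l. apply Rabs_pos. auto. }
  set (A := fun t => 0 <= t <= 1 /\ S (sc t)).
  assert (A0 : A 0).
  { split. lra. apply Hball. apply Dsc. eapply Rbar_le_fin_lt; [|exact Hr0].
    apply dnorm_le. lra. intro v. unfold dsub, sc, dzero. rewrite Rmult_0_l, Rminus_0_r, Rabs_R0.
    pose proof (norm_nn X v). lra. }
  assert (Hbd : bound A) by (exists 1; intros t [Ht _]; lra).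
  destruct (completeness A Hbd (ex_intro _ 0 A0)) as [t0 [Hub Hlub]].
  assert (Ht00 : 0 <= t0) by (apply Hub; auto).
  assert (Ht01 : t0 <= 1) by (apply Hlub; intros t [Ht _]; lra).
  assert (Hbdry : d_bd X S (sc t0)).
  { split.
    - split. apply Dsc. intros r Hr.
      assert (Hex : exists t, A t /\ t0 - r / (mp + 1) < t).
      { apply NNPP. intro N. assert (t0 <= t0 - r / (mp + 1)).
        { apply Hlub. intros t At. apply Rnot_lt_le. intro. apply N; eauto. }
        assert (0 < r / (mp + 1)) by (apply Rdiv_lt_0_compat; lra). lra. }
      destruct Hex as [t [At Ht]].
      exists (sc t). split. apply Dsc. split. apply At.
      eapply Rbar_le_fin_lt. apply Hdist.
      assert (t <= t0) by (apply Hub; auto).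
      rewrite Rabs_left1 by lra.
      assert (t0 - t < r / (mp + 1)) by lra.
      apply Rle_lt_trans with (r / (mp + 1) * mp). apply Rmult_le_compat_r; lra.
      apply Rmult_lt_reg_r with (mp + 1). lra.
      replace (r / (mp + 1) * mp * (mp + 1)) with (r * mp) by (field; lra). nra.
    - intros [_ [rho [Hrho Hb2]]].
      destruct (Rlt_le_dec t0 1) as [Hl|Hl].
      + set (s := t0 + Rmin (1 - t0) (rho / (2 * (mp + 1)))).
        assert (Hm1 : 0 < Rmin (1 - t0) (rho / (2 * (mp + 1)))).
        { apply Rmin_pos. lra. apply Rdiv_lt_0_compat; lra. }
        assert (Hm2 : Rmin (1 - t0) (rho / (2 * (mp + 1))) <= 1 - t0) by apply Rmin_l.
        assert (Hm3 : Rmin (1 - t0) (rho / (2 * (mp + 1))) <= rho / (2 * (mp + 1))) by apply Rmin_r.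
        assert (As : A s).
        { split. unfold s. lra. apply Hb2. apply Dsc.
          eapply Rbar_le_fin_lt. apply Hdist. unfold s.
          replace (t0 + Rmin (1 - t0) (rho / (2 * (mp + 1))) - t0)
            with (Rmin (1 - t0) (rho / (2 * (mp + 1)))) by ring.
          rewrite Rabs_pos_eq by lra.
          apply Rle_lt_trans with (rho / (2 * (mp + 1)) * mp). apply Rmult_le_compat_r; lra.
          apply Rmult_lt_reg_r with (2 * (mp + 1)). lra.
          replace (rho / (2 * (mp + 1)) * mp * (2 * (mp + 1))) with (rho * mp) by (field; lra).
          nra. }
        pose proof (Hub s As). unfold s in H. lra.
      + assert (t0 = 1) by lra. subst t0. apply NS. apply Hb2. auto.
        eapply Rbar_le_fin_lt; [|exact Hrho]. apply dnorm_le. lra.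
        intro v. unfold dsub, sc. replace (phi v - 1 * phi v) with 0 by ring. rewrite Rabs_R0.
        pose proof (norm_nn X v). lra. }
  pose proof (HT (sc t0) (Dsc t0) Hbdry) as H1.
  assert (H2 : Rbar_le (dnorm X (sc t0)) (Fin (t0 * mp))).
  { apply dnorm_le. nra. intro v. unfold sc. rewrite Rabs_mult, Rabs_pos_eq by lra.
    rewrite Rmult_assoc. apply Rmult_le_compat_l; auto. }
  pose proof (Rbar_le_trans _ _ _ H1 H2). simpl in H. nra.
Qed.

End Ball.

Section Main.
Variable X : Banach.
Notation bsub := (bsub X).

Lemma diff_lb B T e : Rbar_diff_le (Fin B) T e -> Rbar_le (Fin (B - e)) T.
Proof. destruct T; simpl; auto. lra. Qed.

Lemma lt_le_false a : Rbar_lt (Fin 0) a -> Rbar_le a (Fin 0) -> False.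
Proof.
  intros [H1 H2] H3. destruct a; simpl in *; auto.
  apply H2. f_equal. lra.
Qed.

Lemma part3_core f e b : Gamma0 X f -> bd_mod X f = Fin b -> e < b ->
  forall g, Ptb X f e g -> Rbar_le (Fin ((b - e) / 2)) (Er X g).
Proof.
  intros [[Hfm _] [Hfc Hfl]] Hb Heb g Hg.
  destruct Hg as [[s0 Hs0] [p [Hpc [Hgp [x [xi [Hx [Hxi [Hdiff Hlip]]]]]]]]].
  rewrite Hb in Hdiff. change (Rbar_plus_R (Fin b) xi) with (Fin (b + xi)) in Hdiff.
  apply diff_lb in Hdiff.
  unfold Sfeq in Hx.
  set (c := b - e). assert (Hc : 0 < c) by (unfold c; lra).
  assert (PL := plip X p x xi Hxi Hpc Hlip).
  assert (glsc : lsc X g) by (eapply g_lsc; eauto).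
  assert (gconv : convex_fun X g) by (eapply g_convex; eauto).
  assert (gnm : forall w, g w <> MInf) by (eapply g_notm; eauto).
  apply Rbar_inf_glb. intros r [u [Hu ->]].
  destruct (g u) as [a| |] eqn:Eu; [ | simpl; auto | destruct Hu as [Hu _]; simpl in Hu; tauto].
  assert (Ha : 0 < a).
  { destruct Hu as [H1 H2]. simpl in H1. destruct H1; auto. subst. tauto. }
  destruct (dist_fin X u (Sf X g) (ex_intro _ s0 Hs0)) as [D [ED [HD0 HD]]].
  rewrite ED. simpl.
  destruct (glsc u 0) as [d [Hd Hball]]. { rewrite Eu. exact Hu. }
  assert (Hfar : forall w, Sf X g w -> d <= bnorm (bsub w u)).
  { intros w Hw. apply Rnot_lt_le. intro Hl. eapply lt_le_false. apply Hball; eauto. exact Hw. }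
  pose proof (dist_glb X u (Sf X g) d Hfar) as HdD. rewrite ED in HdD. simpl in HdD.
  assert (HDp : 0 < D) by lra.
  assert (Efu : f u = Fin (a - p u)).
  { apply Rbar_plus_fin. rewrite <- Hgp. auto. }
  assert (Key : c / 2 * D <= a).
  { unfold tau in Hdiff. destruct (excluded_middle_informative _) as [Hint|Hnint].
    -
      assert (HT : forall chi, is_dual X chi -> d_bd X (subdiff X f x) chi ->
                     Rbar_le (Fin (b + xi - e)) (dnorm X chi)).
      { intros chi Hchi Hbd. eapply Rbar_le_trans. apply Hdiff. apply Rbar_inf_lb. eauto. }
      assert (growth : forall w, Rbar_le (Fin ((xi + c / 2) * bnorm (bsub w x))) (f w)).
      { intro w. destruct (norming X (bsub w x)) as [phi0 [Hl0 [Hb0 Hv0]]].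
        assert (D0 : is_dual X phi0).
        { apply (dual_lin_bound X phi0 1 Hl0). intro y. rewrite Rmult_1_l. auto. }
        set (phi := fun y => (xi + c / 2) * phi0 y).
        assert (Dp : is_dual X phi) by (apply dual_scale; auto).
        assert (Np : Rbar_le (dnorm X phi) (Fin (xi + c / 2))).
        { apply dnorm_le. lra. intro y. unfold phi. rewrite Rabs_mult, Rabs_pos_eq by lra.
          apply Rmult_le_compat_l; auto. lra. }
        assert (Sp : subdiff X f x phi).
        { eapply ball_in; eauto. unfold c. lra. }
        destruct Sp as [_ [a0 [Ea0 Hsub]]]. rewrite Hx in Ea0. inversion Ea0. subst a0.
        specialize (Hsub w). unfold phi in Hsub. rewrite Hv0, Rplus_0_l in Hsub. auto. }
      assert (Hpx : p x <= 0).
      { unfold Sf in Hs0. rewrite Hgp in Hs0. pose proof (growth s0) as G.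
        destruct (f s0) as [c0| |] eqn:E; simpl in Hs0, G; try tauto.
        pose proof (Hlip s0). pose proof (Rle_abs (- (p s0 - p x))). rewrite Rabs_Ropp in H0.
        pose proof (norm_nn X (bsub s0 x)). nra. }
      pose proof (growth u) as G. rewrite Efu in G. simpl in G.
      assert (Hpu : p x - xi * bnorm (bsub u x) <= p u).
      { pose proof (Hlip u). pose proof (Rle_abs (- (p u - p x))). rewrite Rabs_Ropp in H0. lra. }
      assert (Hstar : c / 2 * bnorm (bsub u x) <= a - p x) by nra.
      set (t0 := a / (a - p x)).
      assert (Ht0 : 0 < t0) by (apply Rdiv_lt_0_compat; lra).
      assert (Ht1 : t0 <= 1).
      { unfold t0. apply Rmult_le_reg_r with (a - p x). lra.
        replace (a / (a - p x) * (a - p x)) with a by (field; lra). lra. }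
      set (wpt := badd (bscal t0 x) (bscal (1 - t0) u)).
      pose proof (Hfc x u t0 0 (a - p u) ltac:(lra) Hx Efu) as Cf. fold wpt in Cf.
      pose proof (Hpc x u t0 ltac:(lra)) as Cp. fold wpt in Cp.
      assert (Hzero : t0 * p x + (1 - t0) * a = 0) by (unfold t0; field; lra).
      assert (Swpt : Sf X g wpt).
      { unfold Sf. rewrite Hgp. destruct (f wpt) as [fw| |]; simpl in *; try tauto. nra. }
      pose proof (HD wpt Swpt) as Hw.
      replace (bsub wpt u) with (bscal t0 (bsub x u)) in Hw by (unfold wpt; vec_eq).
      rewrite bnorm_scal, Rabs_pos_eq, norm_sub_sym in Hw by lra.
      assert (Ht0a : t0 * (a - p x) = a) by (unfold t0; field; lra).
      apply Rle_trans with (c / 2 * (t0 * bnorm (bsub u x))).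
      apply Rmult_le_compat_l; lra. nra.
    -
      set (xi' := xi) in Hdiff.
      assert (HT : forall v phi, Rbar_le (Fin (- xi * bnorm (bsub v x) - Rabs (p x))) (f v) ->
                     subdiff X f v phi -> Rbar_le (Fin (b + xi - e)) (dnorm X phi)).
      { intros v phi Hv Hs. eapply Rbar_le_trans. apply Hdiff.
        eapply Rbar_le_trans. apply Rbar_inf_lb. exists v. split. exact Hv. reflexivity.
        apply Rbar_inf_lb. exists phi. split; [apply Hs|]. split; auto. }
      apply Rnot_lt_le. intro Hlt.
      assert (HaD : a / D < c / 2).
      { apply Rmult_lt_reg_r with D; auto. replace (a / D * D) with a by (field; lra). lra. }
      set (kap := (a / D + c / 2) / 2).
      assert (Hk0 : a / D < kap) by (unfold kap; lra).
      assert (Hk1 : kap < c / 2) by (unfold kap; lra).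
      assert (HaD0 : 0 < a / D) by (apply Rdiv_lt_0_compat; lra).
      assert (HkD : a < kap * D).
      { apply Rmult_lt_compat_r with (r := D) in Hk0; auto.
        replace (a / D * D) with a in Hk0 by (field; lra). lra. }
      set (h := fun w => match g w with Fin y => Fin (Rmax y 0) | PInf => PInf | MInf => Fin 0 end).
      assert (hpos : forall w, Rbar_le (Fin 0) (h w)).
      { intro w. unfold h. destruct (g w); simpl; auto. apply Rmax_r. lra. }
      assert (hlt : forall w c', 0 <= c' -> Rbar_lt (Fin c') (g w) -> Rbar_lt (Fin c') (h w)).
      { intros w c' Hc' [H1 H2]. unfold h. destruct (g w) as [y| |]; simpl in *; try tauto.
        - split. simpl. pose proof (Rmax_l y 0). destruct H1. lra. subst; tauto.
          intro Q. inversion Q. pose proof (Rmax_l y 0). destruct H1. lra. subst. tauto.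
        - try (split; simpl; auto; discriminate). }
      assert (hlsc : lsc X h).
      { intros w c' Hc'. destruct (Rlt_le_dec c' 0) as [Hn|Hn].
        - exists 1. split. lra. intros w' _. pose proof (hpos w').
          split. destruct (h w'); simpl in *; auto; lra.
          intro Q. rewrite <- Q in H. simpl in H. lra.
        - assert (Rbar_lt (Fin c') (g w)).
          { unfold h in Hc'. destruct Hc' as [H1 H2].
            destruct (g w) as [y| |] eqn:E; simpl in *.
            + unfold Rmax in *. destruct (Rle_dec y 0).
              * exfalso. destruct H1. lra. apply H2. f_equal. lra.
              * split. simpl. lra. intro Q. inversion Q. subst. apply H2. auto.
            + split; simpl; auto; discriminate.
            + exfalso; eapply gnm; eauto. }
          destruct (glsc w c' H) as [dd [Hdd Hb2]]. exists dd. split; [auto|].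
          intros w' Hw'. apply hlt; auto. }
      assert (hu : h u = Fin a) by (unfold h; rewrite Eu; f_equal; apply Rmax_left; lra).
      destruct (ekeland X h u a kap hpos hlsc hu ltac:(lra)) as [v [av [Ehv [Hav Hmin]]]].
      assert (Hav0 : 0 <= av) by (pose proof (hpos v) as H; rewrite Ehv in H; auto).
      assert (Hvu : bnorm (bsub v u) < D).
      { assert (kap * bnorm (bsub v u) < kap * D) by lra.
        apply Rmult_lt_reg_l with kap; lra. }
      assert (NSv : ~ Sf X g v) by (intro S; pose proof (HD v S); lra).
      destruct (g v) as [y| |] eqn:Egv.
      2:{ unfold h in Ehv. rewrite Egv in Ehv. discriminate. }
      2:{ exfalso; eapply gnm; eauto. }
      assert (Hy : 0 < y) by (apply Rnot_le_lt; intro; apply NSv; unfold Sf; rewrite Egv; auto).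
      assert (Eav : av = y).
      { unfold h in Ehv. rewrite Egv in Ehv. inversion Ehv. apply Rmax_left. lra. }
      subst y.
      destruct (glsc v 0) as [rho [Hrho Hballv]].
      { rewrite Egv. split. simpl. lra. intro Q. inversion Q. lra. }
      assert (Glob : forall w, Rbar_le (Fin (av - kap * bnorm (bsub w v))) (g w)).
      { intro w. destruct (g w) as [bw| |] eqn:Egw; simpl; auto; [|exfalso; eapply gnm; eauto].
        apply Rnot_lt_le. intro Hbw.
        set (N := bnorm (bsub w v)). pose proof (norm_nn X (bsub w v)) as HN. fold N in HN.
        set (t := Rmin 1 (rho / (2 * (N + 1)))).
        assert (Ht0 : 0 < t) by (apply Rmin_pos; [lra | apply Rdiv_lt_0_compat; lra]).
        assert (Ht1 : t <= 1) by apply Rmin_l.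
        assert (Ht2 : t <= rho / (2 * (N + 1))) by apply Rmin_r.
        assert (HtN : t * N < rho).
        { apply Rle_lt_trans with (rho / (2 * (N + 1)) * N). apply Rmult_le_compat_r; lra.
          apply Rmult_lt_reg_r with (2 * (N + 1)). lra.
          replace (rho / (2 * (N + 1)) * N * (2 * (N + 1))) with (rho * N) by (field; lra). nra. }
        set (wt := badd (bscal t w) (bscal (1 - t) v)).
        pose proof (gconv w v t bw av ltac:(lra) Egw Egv) as Cg. fold wt in Cg.
        assert (Nwt : bnorm (bsub wt v) = t * N).
        { replace (bsub wt v) with (bscal t (bsub w v)) by (unfold wt; vec_eq).
          rewrite bnorm_scal, Rabs_pos_eq by lra. auto. }
        assert (Hwt : bnorm (bsub wt v) < rho) by lra.
        pose proof (Hballv wt Hwt) as Pos. pose proof (Hmin wt) as Mw.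
        unfold h in Mw. destruct (g wt) as [gt| |] eqn:Egt; simpl in Cg, Pos; try tauto.
        - destruct Pos as [P1 P2]. simpl in P1. simpl in Mw.
          assert (0 < gt) by (destruct P1; auto; subst; tauto).
          rewrite Rmax_left in Mw by lra. rewrite Nwt in Mw. fold N in Hbw. assert (0 < t * (av - kap * N - bw)) by (apply Rmult_lt_0_compat; lra). nra.
        - destruct Pos as [P1 _]. simpl in P1. tauto. }
      assert (Efv : f v = Fin (av - p v)) by (apply Rbar_plus_fin; rewrite <- Hgp; auto).
      assert (Fbound : forall w, Rbar_le (Fin ((av - p v) - (kap + xi) * bnorm (bsub w v))) (f w)).
      { intro w. pose proof (Glob w) as Gw. rewrite Hgp in Gw. pose proof (PL v w).
        destruct (f w) as [fw| |] eqn:E; simpl in *; auto; try lra; try (exfalso; eapply Hfm; eauto). }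
      destruct (subgrad_exists X f v (av - p v) (kap + xi) Hfc Hfm Efv ltac:(lra) Fbound)
        as [phi [Hpd [Hpb Hps]]].
      assert (Hsd : subdiff X f v phi) by (split; auto; exists (av - p v); auto).
      assert (Hin : Rbar_le (Fin (- xi * bnorm (bsub v x) - Rabs (p x))) (f v)).
      { rewrite Efv. simpl. pose proof (Hlip v). pose proof (Rle_abs (p v - p x)).
        pose proof (Rle_abs (p x)). lra. }
      pose proof (HT v phi Hin Hsd) as H1.
      assert (H2 : Rbar_le (dnorm X phi) (Fin (kap + xi))) by (apply dnorm_le; auto; lra).
      pose proof (Rbar_le_trans _ _ _ H1 H2) as H3. simpl in H3. unfold c in Hk1. lra. }
  apply Rmult_le_reg_r with D; auto. replace (a / D * D) with a by (field; lra).
  lra.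
Qed.

Lemma part3 f : Gamma0 X f -> Rbar_le (bd_mod X f) (thr X (Ptb X f)).
Proof.
  intro Hf. apply Rbar_inf_glb. intros a [e [He [HE ->]]].
  destruct (bd_mod X f) as [b| |] eqn:Eb.
  - simpl. apply Rnot_lt_le. intro Hlt.
    assert (H : Rbar_le (Fin ((b - e) / 2)) (ErFam X (Ptb X f e))).
    { apply Rbar_inf_glb. intros a' [g [Hg ->]]. eapply part3_core; eauto. }
    rewrite HE in H. simpl in H. lra.
  - exfalso. unfold ErFam in HE; rewrite Rbar_inf_empty in HE. discriminate.
    intros a' [g [Hg _]].
    destruct Hg as [_ [p [_ [_ [x [xi [_ [_ [Hdiff _]]]]]]]]].
    rewrite Eb in Hdiff. simpl in Hdiff.
    destruct (tau X f x xi (Rabs (p x))); simpl in Hdiff; tauto.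
  - simpl. auto.
Qed.

End Main.

Theorem mainTheorem8 (X : Banach) (f : X -> Rbar)
  (hf : Gamma0 X f) (hS : exists x, Sf X f x) :
  (Rbar_le (thr X (Ptbw X f)) (thr X (Ptbwl X f)) /\
   Rbar_le (thr X (Ptbwl X f)) (bd_mod X f)) /\
  (Rbar_le (bd_mod X f) (thr X (Ptb X f)) /\
   Rbar_le (thr X (Ptb X f)) (thr X (Ptbl X f))).
Proof.
  split; split.
  - apply thr_mono. intros e g _ H. apply part1_incl; auto.
  - apply part2. apply hf.
  - apply part3; auto.
  - apply thr_mono. intros e g _ H. apply part4_incl; auto.
Qed.
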